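(* Let $P$ be a polynomial with integer coefficients and let $L$ be the differential operator $L=2\pi i\, P\!\left(\frac{1}{2\pi i}\frac{\partial}{\partial x}\right)$. Consider the initial value problem $L U(t,x)=U_t(t,x)$ with $U(0,x)=f(x)$, where $f$ is in class $\mathcal{D}$ (i.e. $f$ is integrable, periodic of period $1$, piecewise continuously differentiable, and $f(x)=\tfrac12\{f(x^+)+f(x^-)\}$ for all $x$), and where $U(t,x)$ is the solution given by the Fourier series $\sum_k c_k\, e(tP(k)+kx)$, $c_k$ being the Fourier coefficients of $f$ (with partial sums taken symmetrically, $\lim_{K\to\infty}\sum_{|k|\le K}$). Denote $$G(u,v;q)=\sum_{w \,(\mathrm{mod}\ q)} e_q\big(uP(w)-vw\big).$$ Then at the rational time $t=u/q$ (a reduced fraction) this series converges and $$U(t,x)=\frac{1}{q}\sum_{v\,(\mathrm{mod}\ q)} G(u,v;q)\, f\!\left(x+\frac{v}{q}\right).$$ Consequently, if $U(0,x)$ is piecewise constant, then $U(t,x)$ is piecewise constant in $x$ at all rational times $t$.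
   Context: Notation: $e(\xi)=e^{2\pi i\xi}$ and $e_q(\xi)=e(\xi/q)=e^{2\pi i\xi/q}$. Functions of class $\mathcal{D}$ have Fourier series converging pointwise to $f$ in the sense $f(x)=\lim_{K\to\infty}\sum_{|k|\le K}c_k e(kx)$. The Fourier modes $e(tP(k)+kx)$ solve $LU=U_t$, so $\sum_k c_k e(tP(k)+kx)$ is the $L^2$ (weak) solution of the initial value problem. *)

(* Defs.v *)
From Stdlib Require Import Reals ZArith List.
From Coquelicot Require Import Coquelicot.
Open Scope R_scope.

Definition e (xi : R) : C := (cos (2 * PI * xi), sin (2 * PI * xi)).

Definition e_q (q : Z) (xi : R) : C := e (xi / IZR q).

(* polynomial with integer coefficients, list of coefficients
   [a0; a1; ...; an] representing a0 + a1 X + ... + an X^n *)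
Fixpoint Peval (P : list Z) (k : Z) : Z :=
  match P with
  | nil => 0%Z
  | a :: P' => (a + k * Peval P' k)%Z
  end.

Definition Csum (l : list C) : C := fold_right Cplus (RtoC 0) l.

Definition residues (q : Z) : list Z := map Z.of_nat (seq 0 (Z.to_nat q)).

Definition symrange (K : nat) : list Z :=
  map (fun j => (Z.of_nat j - Z.of_nat K)%Z) (seq 0 (2 * K + 1)).

Definition right_lim (f : R -> C) (x : R) (l : C) : Prop :=
  filterlim f (at_right x) (locally l).
Definition left_lim (f : R -> C) (x : R) (l : C) : Prop :=
  filterlim f (at_left x) (locally l).

Definition piecewise_C1 (f : R -> C) : Prop :=
  exists (n : nat) (a : nat -> R),
    a 0%nat = 0 /\ a n = 1 /\
    (forall i, (i < n)%nat -> a i < a (S i)) /\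
    (forall i, (i < n)%nat ->
       exists f' : R -> C,
         (forall x, a i < x < a (S i) ->
            @is_derive R_AbsRing C_R_NormedModule f x (f' x) /\ continuous f' x) /\
         (exists l, right_lim f (a i) l) /\ (exists l, left_lim f (a (S i)) l) /\
         (exists l, right_lim f' (a i) l) /\ (exists l, left_lim f' (a (S i)) l)).

(* piecewise constant (for 1-periodic functions: on [0,1]) *)
Definition piecewise_constant (f : R -> C) : Prop :=
  exists (n : nat) (a : nat -> R),
    a 0%nat = 0 /\ a n = 1 /\
    (forall i, (i < n)%nat -> a i < a (S i)) /\
    (forall i, (i < n)%nat -> exists c : C, forall x, a i < x < a (S i) -> f x = c).

Definition class_D (f : R -> C) : Prop :=
  @ex_RInt C_R_CompleteNormedModule f 0 1 /\
  (forall x, f (x + 1) = f x) /\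
  piecewise_C1 f /\
  (forall x, exists lp lm, right_lim f x lp /\ left_lim f x lm /\
       f x = Cmult (RtoC (1/2)) (Cplus lp lm)).

Definition fourier_coeff (f : R -> C) (k : Z) : C :=
  @RInt C_R_CompleteNormedModule (fun x => Cmult (f x) (e (- (IZR k * x)))) 0 1.

Definition U_partial (P : list Z) (f : R -> C) (t x : R) (K : nat) : C :=
  Csum (map (fun k => Cmult (fourier_coeff f k)
                           (e (t * IZR (Peval P k) + IZR k * x))) (symrange K)).

Definition Gsum (P : list Z) (u v q : Z) : C :=
  Csum (map (fun w => e_q q (IZR (u * Peval P w - v * w))) (residues q)).

Definition U_rational (P : list Z) (f : R -> C) (u q : Z) (x : R) : C :=
  Cmult (RtoC (1 / IZR q))
    (Csum (map (fun v => Cmult (Gsum P u v q) (f (x + IZR v / IZR q))) (residues q))).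

(* Main.v *)
Require Import Defs.
From Stdlib Require Import Reals ZArith List.
From Coquelicot Require Import Coquelicot.
Open Scope R_scope.
From Stdlib Require Import Lra Lia FunctionalExtensionality Classical.

Lemma ball_R (x e y : R) : ball x e y <-> Rabs (y - x) < e.
Proof. unfold ball; simpl; unfold AbsRing_ball, abs, minus, plus, opp; simpl. tauto. Qed.

Definition clamp (a b y : R) : R := Rmax a (Rmin b y).

Lemma clamp_in a b y : a <= b -> a <= clamp a b y <= b.
Proof. intros; unfold clamp, Rmax, Rmin; repeat destruct Rle_dec; lra. Qed.

Lemma clamp_id a b y : a <= y <= b -> clamp a b y = y.
Proof. intros; unfold clamp, Rmax, Rmin; repeat destruct Rle_dec; lra. Qed.

Lemma clamp_lip a b y z : Rabs (clamp a b y - clamp a b z) <= Rabs (y - z).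
Proof.
  unfold clamp, Rmax, Rmin; repeat destruct Rle_dec;
  repeat match goal with |- context [Rabs ?x] => 
    destruct (Rcase_abs x) ; [rewrite (Rabs_left x) by lra | rewrite (Rabs_right x) by lra] end; lra.
Qed.

Lemma lip_cont (G : R -> R) L : (forall y z, Rabs (G y - G z) <= L * Rabs (y - z)) ->
  forall y, continuous G y.
Proof.
  intros HL y. apply filterlim_locally. intros eps.
  assert (HL0 : 0 <= L).
  { specialize (HL 1 0). rewrite Rminus_0_r, Rabs_R1 in HL. 
    pose proof (Rabs_pos (G 1 - G 0)). lra. }
  assert (Hd : 0 < eps / (L + 1)).
  { apply Rdiv_lt_0_compat; [apply cond_pos | lra]. }
  exists (mkposreal _ Hd). intros z Hz. apply ball_R in Hz; simpl in Hz.
  apply ball_R. specialize (HL z y).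
  assert (L * Rabs (z - y) <= L * (eps / (L+1))) by (apply Rmult_le_compat_l; [lra| apply Rlt_le; exact Hz]).
  assert (E : (L + 1) * (eps / (L+1)) = eps) by (field; lra).
  lra.
Qed.

Lemma clamp_cont a b y : continuous (clamp a b) y.
Proof. apply (lip_cont _ 1). intros; rewrite Rmult_1_l; apply clamp_lip. Qed.

Definition PW (c d : R) (g : R -> R) (L B : R) : Prop :=
  exists (m : nat) (p : nat -> R), p 0%nat = c /\ p m = d /\
    (forall j, (j < m)%nat -> p j <= p (S j)) /\
    forall j, (j < m)%nat -> exists G : R -> R,
      (forall y, p j < y < p (S j) -> G y = g y) /\
      (forall y z, Rabs (G y - G z) <= L * Rabs (y - z)) /\
      (forall y, Rabs (G y) <= B).

Lemma mono_le (p : nat -> R) m : (forall j, (j < m)%nat -> p j <= p (S j)) ->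
  forall j k, (j <= k)%nat -> (k <= m)%nat -> p j <= p k.
Proof.
  intros H j k Hjk. induction Hjk; intros; [lra|].
  specialize (IHHjk ltac:(lia)). specialize (H m0 ltac:(lia)). lra.
Qed.

Lemma PW_restrict c d g L B c' d' : PW c d g L B -> c <= c' -> c' <= d' -> d' <= d ->
  PW c' d' g L B.
Proof.
  intros [m [p [H0 [Hm [Hmon Hp]]]]] H1 H2 H3.
  exists m, (fun j => clamp c' d' (p j)). split; [|split; [|split]].
  - rewrite H0; unfold clamp, Rmax, Rmin; repeat destruct Rle_dec; lra.
  - rewrite Hm; unfold clamp, Rmax, Rmin; repeat destruct Rle_dec; lra.
  - intros j Hj. specialize (Hmon j Hj). unfold clamp, Rmax, Rmin; repeat destruct Rle_dec; lra.
  - intros j Hj. destruct (Hp j Hj) as [G [HG1 HG2]]. exists G. split; auto.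
    intros y Hy. apply HG1. unfold clamp, Rmax, Rmin in Hy; repeat destruct Rle_dec; lra.
Qed.

Lemma PW_concat c d e g L B : PW c d g L B -> PW d e g L B -> PW c e g L B.
Proof.
  intros [m [p [H0 [Hm [Hmon Hp]]]]] [m' [p' [H0' [Hm' [Hmon' Hp']]]]].
  exists (m + m')%nat, (fun j => if (j <=? m)%nat then p j else p' (j - m)%nat).
  split; [|split; [|split]].
  - simpl. auto.
  - destruct (Nat.leb_spec (m + m') m).
    + assert (m' = 0%nat) by lia. subst m'. rewrite Nat.add_0_r. congruence.
    + replace (m + m' - m)%nat with m' by lia. auto.
  - intros j Hj. destruct (Nat.leb_spec j m); destruct (Nat.leb_spec (S j) m).
    + apply Hmon; lia.
    + assert (j = m) by lia. subst j. rewrite Nat.sub_succ_l by lia. rewrite Nat.sub_diag.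
      rewrite Hm, <- H0'. apply Hmon'; lia.
    + lia.
    + rewrite Nat.sub_succ_l by lia. apply Hmon'; lia.
  - intros j Hj. destruct (Nat.leb_spec j m); destruct (Nat.leb_spec (S j) m).
    + apply Hp; lia.
    + assert (j = m) by lia. subst j. rewrite Nat.sub_succ_l by lia. rewrite Nat.sub_diag.
      destruct (Hp' 0%nat ltac:(lia)) as [G HG]. exists G. rewrite Hm, <- H0'. auto.
    + lia.
    + rewrite Nat.sub_succ_l by lia. apply Hp'; lia.
Qed.

Lemma PW_shift c d g L B t : PW c d g L B -> PW (c - t) (d - t) (fun y => g (y + t)) L B.
Proof.
  intros [m [p [H0 [Hm [Hmon Hp]]]]].
  exists m, (fun j => p j - t). split; [|split; [|split]].
  - rewrite H0; auto.
  - rewrite Hm; auto.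
  - intros j Hj; specialize (Hmon j Hj); lra.
  - intros j Hj. destruct (Hp j Hj) as [G [HG1 [HG2 HG3]]].
    exists (fun y => G (y + t)). split; [|split].
    + intros y Hy. apply HG1. lra.
    + intros y z. replace (y - z) with ((y + t) - (z + t)) by ring. apply HG2.
    + intros; apply HG3.
Qed.

Lemma PW_reflect c d g L B : PW c d g L B -> PW (-d) (-c) (fun y => g (- y)) L B.
Proof.
  intros [m [p [H0 [Hm [Hmon Hp]]]]].
  exists m, (fun j => - p (m - j)%nat). split; [|split; [|split]].
  - rewrite Nat.sub_0_r, Hm; auto.
  - rewrite Nat.sub_diag, H0; auto.
  - intros j Hj. replace (m - j)%nat with (S (m - S j)) by lia.
    specialize (Hmon (m - S j)%nat ltac:(lia)). lra.
  - intros j Hj. destruct (Hp (m - S j)%nat ltac:(lia)) as [G [HG1 [HG2 HG3]]].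
    exists (fun y => G (- y)). split; [|split].
    + intros y Hy. apply HG1. replace (S (m - S j)) with (m - j)%nat in * by lia. lra.
    + intros y z. replace (y - z) with (- (-y - - z)) by ring. rewrite Rabs_Ropp. apply HG2.
    + intros; apply HG3.
Qed.

Lemma PW_ext c d g1 g2 L B : (forall y, g1 y = g2 y) -> PW c d g1 L B -> PW c d g2 L B.
Proof. intros H. replace g2 with g1 by (apply functional_extensionality; auto). auto. Qed.

Lemma PW_sub_const c d g L B l : PW c d g L B -> PW c d (fun y => g y - l) L (B + Rabs l).
Proof.
  intros [m [p [H0 [Hm [Hmon Hp]]]]].
  exists m, p. repeat split; auto.
  intros j Hj. destruct (Hp j Hj) as [G [HG1 [HG2 HG3]]].
  exists (fun y => G y - l). split; [|split].
  - intros y Hy; rewrite HG1; auto.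
  - intros y z. replace (G y - l - (G z - l)) with (G y - G z) by ring. auto.
  - intros y. eapply Rle_trans; [apply Rabs_triang|]. rewrite Rabs_Ropp. specialize (HG3 y). lra.
Qed.

Lemma PW_mult c d g L B h Lh Bh :
  PW c d g L B -> (forall y z, Rabs (h y - h z) <= Lh * Rabs (y - z)) -> (forall y, Rabs (h y) <= Bh) ->
  PW c d (fun y => g y * h y) (L * Bh + B * Lh) (B * Bh).
Proof.
  intros [m [p [H0 [Hm [Hmon Hp]]]]] Hh1 Hh2.
  exists m, p. repeat split; auto.
  intros j Hj. destruct (Hp j Hj) as [G [HG1 [HG2 HG3]]].
  exists (fun y => G y * h y). split; [|split].
  - intros y Hy; rewrite HG1; auto.
  - intros y z.
    replace (G y * h y - G z * h z) with ((G y - G z) * h y + G z * (h y - h z)) by ring.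
    eapply Rle_trans; [apply Rabs_triang|]. rewrite !Rabs_mult.
    pose proof (Rabs_pos (G y - G z)). pose proof (Rabs_pos (h y - h z)).
    pose proof (Rabs_pos (G z)). pose proof (Rabs_pos (h y)). pose proof (Rabs_pos (y - z)).
    specialize (HG2 y z). specialize (Hh1 y z). specialize (HG3 z). specialize (Hh2 y).
    apply Rle_trans with (L * Rabs (y - z) * Bh + B * (Lh * Rabs (y - z))); [|nra].
    apply Rplus_le_compat; apply Rmult_le_compat; auto.
  - intros y. rewrite Rabs_mult. apply Rmult_le_compat; auto using Rabs_pos.
Qed.

Lemma cont_pt (f : R -> R) x : continuity_pt f x -> continuous f x.
Proof. intros H. apply continuity_pt_filterlim in H. exact H. Qed.

Lemma pt_cont (f : R -> R) x : continuous f x -> continuity_pt f x.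
Proof. intros H. apply continuity_pt_filterlim. exact H. Qed.

Lemma cont_mult (f g : R -> R) x : continuous f x -> continuous g x ->
  continuous (fun y => f y * g y) x.
Proof. intros. apply cont_pt. apply (continuity_pt_mult f g); apply pt_cont; auto. Qed.

Lemma cont_minus (f g : R -> R) x : continuous f x -> continuous g x ->
  continuous (fun y => f y - g y) x.
Proof. intros. apply cont_pt. apply (continuity_pt_minus f g); apply pt_cont; auto. Qed.

Lemma cont_sin_lin (a b x : R) : continuous (fun y => sin (a * y + b)) x.
Proof.
  apply cont_pt. apply (continuity_pt_comp (fun y => a * y + b) sin).
  - apply continuity_pt_plus; [apply continuity_pt_scal, continuity_pt_id | apply continuity_pt_const; intros ? ?; auto].
  - apply continuity_sin.
Qed.

Lemma cont_sin_mul (a x : R) : continuous (fun y => sin (a * y)) x.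
Proof.
  apply cont_pt. apply (continuity_pt_comp (fun y => a * y) sin).
  - apply continuity_pt_scal, continuity_pt_id.
  - apply continuity_sin.
Qed.

Lemma exR_cont (F : R -> R) c d : (forall z, Rmin c d <= z <= Rmax c d -> continuous F z) -> ex_RInt F c d.
Proof. intros H. apply (@ex_RInt_continuous R_CompleteNormedModule). exact H. Qed.

Lemma rint_abs_le (f : R -> R) a b M : a <= b -> ex_RInt f a b ->
  (forall x, a <= x <= b -> Rabs (f x) <= M) -> Rabs (RInt f a b) <= (b - a) * M.
Proof.
  intros Hab Hex HM.
  apply (@norm_RInt_le_const R_NormedModule f a b (RInt f a b) M Hab).
  - intros x Hx. apply HM. auto.
  - apply (RInt_correct f a b Hex).
Qed.

Lemma lip_nonneg (G : R -> R) L : (forall y z, Rabs (G y - G z) <= L * Rabs (y - z)) -> 0 <= L.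
Proof.
  intros HL. specialize (HL 1 0). rewrite Rminus_0_r, Rabs_R1 in HL.
  pose proof (Rabs_pos (G 1 - G 0)). lra.
Qed.

Lemma RInt_ext' (f g : R -> R) a b : (forall x, f x = g x) -> RInt f a b = RInt g a b.
Proof. intros H. replace g with f by (apply functional_extensionality; auto). auto. Qed.

Lemma RL1 (G : R -> R) L B a b N :
  (forall y z, Rabs (G y - G z) <= L * Rabs (y - z)) -> (forall y, Rabs (G y) <= B) ->
  a <= b -> 0 < N ->
  Rabs (RInt (fun y => G y * sin (N * PI * y)) a b) <= (2 * B + L * (b - a)) / N.
Proof.
  intros HL HB Hab HN.
  assert (HL0 := lip_nonneg G L HL).
  assert (HB0 : 0 <= B) by (pose proof (HB 0); pose proof (Rabs_pos (G 0)); lra).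
  assert (HGc := lip_cont G L HL).
  set (h := / N).
  assert (Hh : 0 < h) by (apply Rinv_0_lt_compat; auto).
  assert (HNh : N * h = 1) by (unfold h; field; lra).
  set (F := fun y => G y * sin (N * PI * y)).
  assert (HFc : forall y, continuous F y).
  { intros y. apply cont_mult; auto. 
    apply cont_sin_mul. }
  assert (HFex : forall c d, ex_RInt F c d) by (intros; apply exR_cont; auto).
  assert (HFb : forall y, Rabs (F y) <= B).
  { intros y. unfold F. rewrite Rabs_mult. pose proof (HB y). pose proof (Rabs_pos (G y)).
    pose proof (Rabs_pos (sin (N*PI*y))).
    assert (Rabs (sin (N * PI * y)) <= 1) by (apply Rabs_le; apply SIN_bound). nra. }
  assert (Hfin : (2 * B + L * (b - a)) / N = (2 * B + L * (b - a)) * h) by (unfold h, Rdiv; auto).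
  rewrite Hfin.
  destruct (Rle_lt_dec (b - a) h) as [Hsmall | Hbig].
  - eapply Rle_trans; [apply rint_abs_le; [lra | auto | intros; apply HFb]|].
    assert (0 <= L * (b - a)) by (apply Rmult_le_pos; lra). nra.
  - set (F2 := fun w => G (w - h) * sin (N * PI * w)).
    assert (HF2c : forall y, continuous F2 y).
    { intros y. apply cont_mult.
      - apply (lip_cont (fun w => G (w - h)) L). intros y0 z0.
        replace (y0 - z0) with ((y0 - h) - (z0 - h)) by ring. apply HL.
      - apply cont_sin_mul. }
    assert (HF2ex : forall c d, ex_RInt F2 c d) by (intros; apply exR_cont; auto).
    assert (HF2b : forall y, Rabs (F2 y) <= B).
    { intros y. unfold F2. rewrite Rabs_mult. pose proof (HB (y - h)). pose proof (Rabs_pos (G (y-h))).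
      pose proof (Rabs_pos (sin (N*PI*y))).
      assert (Rabs (sin (N * PI * y)) <= 1) by (apply Rabs_le; apply SIN_bound). nra. }
    assert (HJ : RInt F2 (a + h) (b + h) = - RInt F a b).
    { assert (E := RInt_comp_lin F2 1 h a b).
      replace (1 * a + h) with (a + h) in E by ring. replace (1 * b + h) with (b + h) in E by ring.
      rewrite <- E by auto.
      transitivity (RInt (fun y => opp (F y)) a b).
      - apply RInt_ext'. intros y. unfold F2, F. change (scal 1 ?x) with (1 * x). rewrite Rmult_1_l.
        replace (1 * y + h - h) with y by ring.
        replace (N * PI * (1 * y + h)) with (N * PI * y + PI).
        + rewrite neg_sin. unfold opp; simpl. ring.
        + replace PI with (N * h * PI) at 2 by (rewrite HNh; ring). ring.
      - exact (RInt_opp F a b (HFex a b)). }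
    assert (HI : RInt F a b = RInt F a (a + h) + RInt F (a + h) b).
    { symmetry. apply (RInt_Chasles F); auto. }
    assert (HJ2 : RInt F2 (a + h) (b + h) = RInt F2 (a + h) b + RInt F2 b (b + h)).
    { symmetry. apply (RInt_Chasles F2); auto. }
    set (D := fun w => F w - F2 w).
    assert (HD : RInt D (a + h) b = RInt F (a + h) b - RInt F2 (a + h) b).
    { unfold D. apply (RInt_minus F F2); auto. }
    assert (HDb : Rabs (RInt D (a + h) b) <= (b - (a + h)) * (L * h)).
    { apply rint_abs_le; [lra| unfold D; apply (ex_RInt_minus F F2); auto |].
      intros x Hx. unfold D, F, F2. 
      replace (G x * sin (N * PI * x) - G (x - h) * sin (N * PI * x)) with
        ((G x - G (x - h)) * sin (N * PI * x)) by ring.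
      rewrite Rabs_mult. specialize (HL x (x - h)).
      replace (x - (x - h)) with h in HL by ring. rewrite (Rabs_right h) in HL by lra.
      assert (Rabs (sin (N * PI * x)) <= 1) by (apply Rabs_le; apply SIN_bound).
      pose proof (Rabs_pos (G x - G (x - h))). pose proof (Rabs_pos (sin (N * PI * x))). nra. }
    assert (H1 : Rabs (RInt F a (a + h)) <= (a + h - a) * B) by (apply rint_abs_le; auto; lra).
    assert (H2 : Rabs (RInt F2 b (b + h)) <= (b + h - b) * B) by (apply rint_abs_le; auto; lra).
    assert (E2 : 2 * RInt F a b = RInt F a (a + h) + RInt D (a + h) b - RInt F2 b (b + h)).
    { rewrite HD. assert (RInt F a b = - RInt F2 (a+h) (b+h)) by lra. lra. }
    assert (Rabs (2 * RInt F a b) <= 2 * B * h + L * (b - a) * h).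
    { rewrite E2. eapply Rle_trans; [apply Rabs_triang|]. 
      eapply Rle_trans; [apply Rplus_le_compat_r, Rabs_triang|]. rewrite Rabs_Ropp.
      assert (0 <= L * h * h) by (apply Rmult_le_pos; [apply Rmult_le_pos|]; lra). nra. }
    rewrite Rabs_mult, Rabs_right in H by lra.
    assert (0 <= L * (b - a) * h) by (apply Rmult_le_pos; [apply Rmult_le_pos|]; lra).
    fold F. nra.
Qed.

Lemma PW_int c d g L B h : PW c d g L B -> c <= d ->
  (forall y, c <= y <= d -> continuous h y) -> ex_RInt (fun y => g y * h y) c d.
Proof.
  intros [m [p [H0 [Hm [Hmon Hp]]]]] Hcd Hh.
  assert (Hmo := mono_le p m Hmon).
  assert (Hc : forall k, (k <= m)%nat -> ex_RInt (fun y => g y * h y) (p 0%nat) (p k)).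
  { induction k; intros Hk.
    - apply ex_RInt_point.
    - apply (ex_RInt_Chasles _ _ (p k)); [apply IHk; lia|].
      destruct (Hp k ltac:(lia)) as [G [HG1 [HG2 HG3]]].
      apply (ex_RInt_ext (fun y => G y * h y)).
      + intros x Hx. rewrite Rmin_left, Rmax_right in Hx by (apply Hmon; lia).
        rewrite HG1; auto.
      + apply exR_cont. intros z Hz. rewrite Rmin_left, Rmax_right in Hz by (apply Hmon; lia).
        apply cont_mult; [apply (lip_cont G L HG2)|]. apply Hh.
        assert (p 0%nat <= p k) by (apply Hmo; lia). assert (p (S k) <= p m) by (apply Hmo; lia).
        lra. }
  rewrite <- H0, <- Hm. apply Hc; lia.
Qed.

Lemma PW_RL c d g L B : PW c d g L B -> c <= d ->
  exists C, forall N, 0 < N -> Rabs (RInt (fun y => g y * sin (N * PI * y)) c d) <= C / N.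
Proof.
  intros HPW Hcd. destruct HPW as [m [p [H0 [Hm [Hmon Hp]]]]].
  assert (Hmo := mono_le p m Hmon).
  exists (2 * B * INR m + L * (d - c)). intros N HN.
  assert (Hc : forall k, (k <= m)%nat -> ex_RInt (fun y => g y * sin (N * PI * y)) (p 0%nat) (p k) /\
     Rabs (RInt (fun y => g y * sin (N * PI * y)) (p 0%nat) (p k)) <= (2 * B * INR k + L * (p k - p 0%nat)) / N).
  { induction k; intros Hk.
    - split; [apply ex_RInt_point|]. rewrite RInt_point. unfold zero; simpl.
      rewrite Rabs_R0. replace (2 * B * 0 + L * (p 0%nat - p 0%nat)) with 0 by ring.
      unfold Rdiv; rewrite Rmult_0_l; lra.
    - destruct (IHk ltac:(lia)) as [IH1 IH2].
      destruct (Hp k ltac:(lia)) as [G [HG1 [HG2 HG3]]].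
      assert (Hk1 : p k <= p (S k)) by (apply Hmon; lia).
      assert (Hpc : forall x, Rmin (p k) (p (S k)) < x < Rmax (p k) (p (S k)) ->
         G x * sin (N * PI * x) = g x * sin (N * PI * x)).
      { intros x Hx. rewrite Rmin_left, Rmax_right in Hx by lra. rewrite HG1; auto. }
      assert (Hex : ex_RInt (fun y => g y * sin (N * PI * y)) (p k) (p (S k))).
      { apply (ex_RInt_ext (fun y => G y * sin (N * PI * y))); auto.
        apply exR_cont. intros; apply cont_mult; [apply (lip_cont G L HG2)| apply cont_sin_mul]. }
      split; [apply (ex_RInt_Chasles _ _ (p k)); auto|].
      rewrite <- (RInt_Chasles _ (p 0%nat) (p k) (p (S k))) by auto.
      rewrite <- (RInt_ext _ _ _ _ Hpc).
      pose proof (RL1 G L B (p k) (p (S k)) N HG2 HG3 Hk1 HN) as HR.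
      change (plus ?x ?y) with (x + y).
      eapply Rle_trans; [apply Rabs_triang|].
      rewrite S_INR. unfold Rdiv in *. 
      replace ((2 * B * (INR k + 1) + L * (p (S k) - p 0%nat)) * / N) with
        ((2 * B * INR k + L * (p k - p 0%nat)) * / N + (2 * B + L * (p (S k) - p k)) * / N) by ring.
      apply Rplus_le_compat; auto. }
  destruct (Hc m ltac:(lia)) as [_ Hf]. rewrite H0, Hm in Hf. exact Hf.
Qed.

Lemma PW_first c d g L B : PW c d g L B -> c < d ->
  exists delta, 0 < delta /\ forall y z, c < y < c + delta -> c < z < c + delta ->
    Rabs (g y - g z) <= L * Rabs (y - z).
Proof.
  intros [m [p [H0 [Hm [Hmon Hp]]]]] Hcd.
  assert (Hmo := mono_le p m Hmon).
  assert (Hf : forall k, (k <= m)%nat -> p k > c -> exists j, (j < k)%nat /\ p j = c /\ p j < p (S j)).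
  { induction k; intros Hk Hpk; [lra|].
    destruct (Rlt_le_dec c (p k)) as [Hlt|Hle].
    - destruct (IHk ltac:(lia) Hlt) as [j [Hj1 Hj2]]. exists j; split; [lia|auto].
    - exists k. assert (p 0%nat <= p k) by (apply Hmo; lia). split; [lia|]. split; lra. }
  destruct (Hf m ltac:(lia) ltac:(lra)) as [j [Hj [Hj1 Hj2]]].
  destruct (Hp j ltac:(lia)) as [G [HG1 [HG2 HG3]]].
  exists (p (S j) - c). split; [lra|]. intros y z Hy Hz.
  rewrite <- !HG1 by lra. apply HG2.
Qed.

Lemma sin_lip a b : Rabs (sin a - sin b) <= Rabs (a - b).
Proof.
  destruct (MVT.MVT_abs sin cos b a) as [c [Hc _]].
  - intros; apply derivable_pt_lim_sin.
  - rewrite Hc. pose proof (COS_bound c). 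
    assert (Rabs (cos c) <= 1) by (apply Rabs_le; lra).
    pose proof (Rabs_pos (a - b)). nra.
Qed.

Lemma sin_ge_t3 a : 0 <= a -> a <= PI -> a - a^3/6 <= sin a.
Proof.
  intros H1 H2. destruct (SIN a H1 H2) as [H _].
  unfold sin_lb, sin_approx in H. cbn [sum_f_R0] in H. unfold sin_term in H.
  rewrite !INR_IZR_INZ in H.
  cbn [Nat.mul Nat.add Factorial.fact Z.of_nat PosDef.Pos.of_succ_nat PosDef.Pos.succ] in H.
  assert (a <= 4) by (pose proof PI_4; lra).
  assert (a^5/120 - a^7/5040 >= 0).
  { assert (a^7 = a^5 * (a*a)) by ring. assert (0 <= a^5) by (apply pow_le; lra).
    assert (a * a <= 16) by nra. unfold Rdiv. nra. }
  simpl pow in H. simpl pow. lra.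
Qed.

Lemma sin_pi_ge z : 0 <= z <= 1/2 -> z <= sin (PI * z).
Proof.
  intros Hz. pose proof PI_4. pose proof PI2_3_2.
  assert (0 <= PI * z) by nra. assert (PI * z <= PI) by nra.
  pose proof (sin_ge_t3 (PI * z) ltac:(lra) ltac:(lra)).
  assert (PI * z <= 2) by nra.
  assert ((PI * z) ^ 3 / 6 <= (PI * z) * (4/6)).
  { simpl. assert ((PI*z)*(PI*z) <= 4) by nra. nra. }
  nra.
Qed.

Fixpoint Dk (K : nat) (z : R) : R :=
  match K with
  | O => 1
  | S K' => Dk K' z + 2 * cos (2 * PI * INR (S K') * z)
  end.

Lemma Dk_sin K z : Dk K z * sin (PI * z) = sin ((2 * INR K + 1) * PI * z).
Proof.
  induction K; cbn [Dk].
  - rewrite Rmult_1_l; f_equal; simpl; ring.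
  - rewrite Rmult_plus_distr_r, IHK.
    replace ((2 * INR (S K) + 1) * PI * z) with (2 * PI * INR (S K) * z + PI * z) by ring.
    replace ((2 * INR K + 1) * PI * z) with (2 * PI * INR (S K) * z - PI * z) by (rewrite S_INR; ring).
    rewrite sin_plus, sin_minus. ring.
Qed.

Lemma Dk_even K z : Dk K (- z) = Dk K z.
Proof.
  induction K; cbn [Dk]; auto. rewrite IHK.
  replace (2 * PI * INR (S K) * - z) with (- (2 * PI * INR (S K) * z)) by ring.
  rewrite cos_neg. auto.
Qed.

Lemma Dk_cont K z : continuous (Dk K) z.
Proof.
  induction K; cbn [Dk].
  - apply continuous_const.
  - apply cont_pt. apply continuity_pt_plus; [apply pt_cont; auto|].
    apply continuity_pt_scal.
    apply (continuity_pt_comp (fun y => 2 * PI * INR (S K) * y) cos).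
    + apply continuity_pt_scal, continuity_pt_id.
    + apply continuity_cos.
Qed.

Lemma sin_nat_pi n : sin (INR n * PI) = 0.
Proof.
  induction n. - simpl. rewrite Rmult_0_l. apply sin_0.
  - rewrite S_INR. replace ((INR n + 1) * PI) with (INR n * PI + PI) by ring.
    rewrite neg_sin, IHn. ring.
Qed.

Lemma is_RInt_eq (f : R -> R) a b l l' : is_RInt f a b l -> l = l' -> is_RInt f a b l'.
Proof. intros H E; subst; auto. Qed.

Lemma Dk_int K : is_RInt (Dk K) 0 (1/2) (1/2).
Proof.
  induction K; cbn [Dk].
  - eapply is_RInt_eq; [apply (@is_RInt_const R_NormedModule 0 (1/2) 1)|].
    change ((1/2 - 0) * 1 = 1/2); field.
  - eapply is_RInt_eq; [apply (is_RInt_plus (Dk K) (fun z => 2 * cos (2 * PI * INR (S K) * z))); [exact IHK|]|].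
    2: { instantiate (1 := 0). change (1/2 + 0 = 1/2). ring. }
    set (c := 2 * PI * INR (S K)).
    assert (Hc : c <> 0).
    { unfold c. pose proof PI_RGT_0. assert (0 < INR (S K)) by (apply lt_0_INR; lia). nra. }
    assert (E : 0 = minus ((2 / c) * sin (c * (1/2))) ((2 / c) * sin (c * 0))).
    { rewrite Rmult_0_r, sin_0. unfold c. 
      replace (2 * PI * INR (S K) * (1/2)) with (INR (S K) * PI) by field.
      rewrite sin_nat_pi. change (minus ?a ?b) with (a - b). ring. }
    eapply is_RInt_eq; [apply (is_RInt_derive (fun z => (2 / c) * sin (c * z)))| symmetry; exact E].
    + intros x _. auto_derive; auto. field; auto.
    + intros x _. apply cont_pt. apply continuity_pt_scal.
      apply (continuity_pt_comp (fun y => c * y) cos).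
      * apply continuity_pt_scal, continuity_pt_id.
      * apply continuity_cos.
Qed.

Lemma Dk_bound K z : 0 < z <= 1/2 -> Rabs (Dk K z) <= / z.
Proof.
  intros Hz. pose proof (sin_pi_ge z ltac:(lra)) as Hs.
  assert (Hsp : 0 < sin (PI * z)) by lra.
  assert (E : Dk K z = sin ((2 * INR K + 1) * PI * z) / sin (PI * z)).
  { rewrite <- Dk_sin. field. lra. }
  rewrite E. unfold Rdiv. rewrite Rabs_mult, Rabs_inv, (Rabs_right (sin (PI * z))) by lra.
  assert (Rabs (sin ((2 * INR K + 1) * PI * z)) <= 1) by (apply Rabs_le; apply SIN_bound).
  assert (/ sin (PI * z) <= / z) by (apply Rinv_le_contravar; lra).
  assert (0 < / sin (PI * z)) by (apply Rinv_0_lt_compat; lra).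
  pose proof (Rabs_pos (sin ((2 * INR K + 1) * PI * z))). nra.
Qed.

Lemma right_lim_bound (g : R -> R) (x0 l L d : R) :
  filterlim (fun z => g (x0 + z)) (at_right 0) (locally l) ->
  0 < d -> (forall y z, 0 < y < d -> 0 < z < d -> Rabs (g (x0 + y) - g (x0 + z)) <= L * Rabs (y - z)) ->
  forall z, 0 < z < d -> Rabs (g (x0 + z) - l) <= L * z.
Proof.
  intros Hlim Hd HL z Hz.
  destruct (Rle_lt_dec (Rabs (g (x0 + z) - l)) (L * z)) as [H|H]; auto. exfalso.
  set (e' := Rabs (g (x0 + z) - l) - L * z).
  assert (He' : 0 < e') by (unfold e'; lra).
  specialize (Hlim (ball l (mkposreal _ He')) (locally_ball l (mkposreal _ He'))).
  unfold at_right, within in Hlim. destruct Hlim as [eta Heta].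
  set (w := Rmin (eta / 2) (z / 2)).
  assert (Hw1 : 0 < w) by (unfold w; apply Rmin_glb_lt; [pose proof (cond_pos eta)|]; lra).
  assert (Hw2 : w < z) by (unfold w; pose proof (Rmin_r (eta/2) (z/2)); lra).
  assert (Hw3 : w < eta) by (unfold w; pose proof (Rmin_l (eta/2) (z/2)); pose proof (cond_pos eta); lra).
  specialize (Heta w). assert (Hb : ball 0 eta w) by (apply ball_R; rewrite Rminus_0_r, Rabs_right; lra).
  specialize (Heta Hb Hw1). pose proof (proj1 (ball_R _ _ _) Heta) as Heta'. simpl in Heta'.
  specialize (HL z w Hz ltac:(lra)).
  rewrite (Rabs_right (z - w)) in HL by lra.
  assert (Hle : L * (z - w) <= L * z).
  { assert (0 <= L).
    { destruct (Rle_lt_dec 0 L); auto. exfalso. pose proof (Rabs_pos (g (x0 + z) - g (x0 + w))). nra. }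
    nra. }
  assert (Rabs (g (x0 + z) - l) <= Rabs (g (x0 + z) - g (x0 + w)) + Rabs (g (x0 + w) - l)).
  { replace (g (x0 + z) - l) with ((g (x0 + z) - g (x0 + w)) + (g (x0 + w) - l)) by ring.
    apply Rabs_triang. }
  unfold e' in Heta'. lra.
Qed.

Lemma hh_props (delta : R) : 0 < delta <= 1/4 ->
  let s0 := sin (PI * delta) in
  0 < s0 /\
  (forall z, s0 <= sin (PI * clamp delta (1/2) z)) /\
  (forall z, Rabs (/ sin (PI * clamp delta (1/2) z)) <= / s0) /\
  (forall y z, Rabs (/ sin (PI * clamp delta (1/2) y) - / sin (PI * clamp delta (1/2) z))
       <= (PI / (s0 * s0)) * Rabs (y - z)).
Proof.
  intros Hd s0. pose proof PI_RGT_0 as HPI.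
  assert (Hs0 : 0 < s0) by (unfold s0; apply sin_gt_0; nra).
  assert (Hge : forall z, s0 <= sin (PI * clamp delta (1/2) z)).
  { intros z. pose proof (clamp_in delta (1/2) z ltac:(lra)). unfold s0.
    apply sin_incr_1; nra. }
  split; [auto|]. split; [auto|]. split.
  - intros z. specialize (Hge z). rewrite Rabs_right.
    + apply Rinv_le_contravar; lra.
    + left; apply Rinv_0_lt_compat; lra.
  - intros y z. pose proof (Hge y) as Hy. pose proof (Hge z) as Hz.
    set (sy := sin (PI * clamp delta (1/2) y)) in *.
    set (sz := sin (PI * clamp delta (1/2) z)) in *.
    replace (/ sy - / sz) with ((sz - sy) / (sy * sz)) by (field; lra).
    unfold Rdiv. rewrite Rabs_mult, Rabs_inv, (Rabs_right (sy * sz)) by nra.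
    assert (Hl : Rabs (sz - sy) <= PI * Rabs (y - z)).
    { unfold sz, sy. eapply Rle_trans; [apply sin_lip|].
      replace (PI * clamp delta (1 / 2) z - PI * clamp delta (1 / 2) y) with
        (PI * (clamp delta (1/2) z - clamp delta (1/2) y)) by ring.
      rewrite Rabs_mult, (Rabs_right PI) by lra. apply Rmult_le_compat_l; [lra|].
      replace (clamp delta (1/2) z - clamp delta (1/2) y) with (- (clamp delta (1/2) y - clamp delta (1/2) z)) by ring.
      rewrite Rabs_Ropp. apply clamp_lip. }
    assert (/ (sy * sz) <= / (s0 * s0)) by (apply Rinv_le_contravar; nra).
    assert (0 <= / (sy * sz)) by (left; apply Rinv_0_lt_compat; nra).
    pose proof (Rabs_pos (sz - sy)). pose proof (Rabs_pos (y - z)).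
    apply Rle_trans with (PI * Rabs (y - z) * / (s0 * s0)).
    + apply Rle_trans with (PI * Rabs (y - z) * / (sy * sz)); [apply Rmult_le_compat_r; auto|].
      apply Rmult_le_compat_l; [|auto]. nra.
    + right; field; lra.
Qed.

Lemma B3 (psi : R -> R) x0 l L B :
  PW x0 (x0 + 1/2) psi L B -> filterlim (fun z => psi (x0 + z)) (at_right 0) (locally l) ->
  forall eps, 0 < eps -> exists K0, forall K, (K0 <= K)%nat ->
    Rabs (RInt (fun z => (psi (x0 + z) - l) * Dk K z) 0 (1/2)) < eps.
Proof.
  intros HPW Hlim eps Heps.
  set (g := fun z => psi (x0 + z) - l).
  assert (HPg : PW 0 (1/2) g L (B + Rabs l)).
  { apply PW_sub_const. apply (PW_ext _ _ (fun y => psi (y + x0))).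
    - intros; f_equal; ring.
    - pose proof (PW_shift _ _ _ _ _ x0 HPW) as H.
      replace (x0 - x0) with 0 in H by ring. replace (x0 + 1/2 - x0) with (1/2) in H by ring. exact H. }
  destruct (PW_first _ _ _ _ _ HPg ltac:(lra)) as [d0 [Hd0 HLip]].
  assert (HL0 : 0 <= L).
  { specialize (HLip (d0/2) (d0/4) ltac:(lra) ltac:(lra)).
    rewrite (Rabs_right (d0/2 - d0/4)) in HLip by lra. pose proof (Rabs_pos (g (d0/2) - g (d0/4))).
    nra. }
  assert (Hgz : forall z, 0 < z < d0 -> Rabs (g z) <= L * z).
  { intros z Hz. unfold g. apply (right_lim_bound psi x0 l L d0 Hlim Hd0); auto.
    intros y w Hy Hw. specialize (HLip y w ltac:(lra) ltac:(lra)). unfold g in HLip.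
    replace (psi (x0 + y) - psi (x0 + w)) with (psi (x0 + y) - l - (psi (x0 + w) - l)) by ring. auto. }
  set (delta := Rmin (d0 / 2) (Rmin (1/4) (eps / (2 * (L + 1))))).
  assert (Hde1 : 0 < delta).
  { unfold delta. apply Rmin_glb_lt; [lra|]. apply Rmin_glb_lt; [lra|].
    apply Rdiv_lt_0_compat; lra. }
  assert (Hde2 : delta <= d0 / 2) by apply Rmin_l.
  assert (Hde3 : delta <= 1/4) by (unfold delta; eapply Rle_trans; [apply Rmin_r|apply Rmin_l]).
  assert (Hde4 : delta <= eps / (2 * (L + 1))) by (unfold delta; eapply Rle_trans; [apply Rmin_r|apply Rmin_r]).
  assert (HdL : delta * L < eps / 2).
  { assert (delta * (2 * (L + 1)) <= eps).
    { apply Rmult_le_reg_r with (/ (2 * (L + 1))); [apply Rinv_0_lt_compat; lra|].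
      rewrite Rmult_assoc, Rinv_r by lra. rewrite Rmult_1_r. exact Hde4. }
    nra. }
  destruct (hh_props delta ltac:(lra)) as [Hs0 [_ [Hhb Hhl]]].
  set (s0 := sin (PI * delta)) in *.
  set (hh := fun z => / sin (PI * clamp delta (1/2) z)).
  assert (HPg2 : PW delta (1/2) (fun y => g y * hh y)
            (L * / s0 + (B + Rabs l) * (PI / (s0 * s0))) ((B + Rabs l) * / s0)).
  { apply PW_mult; auto. apply (PW_restrict 0 (1/2)); auto; lra. }
  destruct (PW_RL _ _ _ _ _ HPg2 ltac:(lra)) as [C HC].
  exists (Z.to_nat (up (2 * C / eps))). intros K HK.
  set (N := 2 * INR K + 1).
  assert (HN : 0 < N) by (unfold N; pose proof (pos_INR K); lra).
  assert (HKC : 2 * C / eps < N).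
  { unfold N. destruct (archimed (2 * C / eps)) as [Ha _].
    assert (IZR (up (2 * C / eps)) <= INR K).
    { destruct (Z_lt_le_dec (up (2 * C / eps)) 0).
      - pose proof (pos_INR K). assert (IZR (up (2 * C / eps)) < 0) by (apply IZR_lt; auto). lra.
      - rewrite <- (Z2Nat.id (up (2 * C / eps))) by auto. rewrite <- INR_IZR_INZ.
        apply le_INR. auto. }
    pose proof (pos_INR K). lra. }
  assert (HCN : C / N < eps / 2).
  { apply Rmult_lt_reg_r with (2 * N / eps). 
    { apply Rdiv_lt_0_compat; lra. }
    replace (C / N * (2 * N / eps)) with (2 * C / eps) by (field; lra).
    replace (eps / 2 * (2 * N / eps)) with N by (field; lra). auto. }
  set (F := fun z => g z * Dk K z).
  change (Rabs (RInt F 0 (1/2)) < eps).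
  assert (HFex : ex_RInt F 0 (1/2)).
  { apply (PW_int _ _ _ _ _ _ HPg); [lra|]. intros; apply Dk_cont. }
  assert (HF1 : ex_RInt F 0 delta) by (apply (@ex_RInt_Chasles_1 R_CompleteNormedModule _ _ _ (1/2)); auto; lra).
  assert (HF2 : ex_RInt F delta (1/2)) by (apply (@ex_RInt_Chasles_2 R_CompleteNormedModule _ 0); auto; lra).
  rewrite <- (RInt_Chasles F 0 delta (1/2)) by auto.
  change (plus ?a ?b) with (a + b).
  set (Ft := fun z => if Rle_dec z 0 then 0 else F z).
  assert (Hext1 : forall x, Rmin 0 delta < x < Rmax 0 delta -> F x = Ft x).
  { intros x Hx. rewrite Rmin_left, Rmax_right in Hx by lra. unfold Ft.
    destruct (Rle_dec x 0); [lra|auto]. }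
  assert (HA : Rabs (RInt F 0 delta) <= (delta - 0) * L).
  { rewrite (RInt_ext _ _ _ _ Hext1). apply rint_abs_le; [lra| apply (ex_RInt_ext F); auto|].
    intros x Hx. unfold Ft. destruct (Rle_dec x 0).
    - rewrite Rabs_R0; auto.
    - unfold F. rewrite Rabs_mult. 
      assert (Hx1 : 0 < x < d0) by lra.
      pose proof (Hgz x Hx1). pose proof (Dk_bound K x ltac:(lra)).
      pose proof (Rabs_pos (g x)). pose proof (Rabs_pos (Dk K x)).
      apply Rle_trans with (L * x * / x).
      + apply Rmult_le_compat; auto.
      + right. field. lra. }
  assert (Hext2 : forall x, Rmin delta (1/2) < x < Rmax delta (1/2) ->
            F x = (fun y => g y * hh y * sin (N * PI * y)) x).
  { intros x Hx. rewrite Rmin_left, Rmax_right in Hx by lra. unfold F, hh.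
    rewrite clamp_id by lra.
    assert (Hsx : 0 < sin (PI * x)) by (apply sin_gt_0; pose proof PI_RGT_0; nra).
    unfold N. rewrite <- (Dk_sin K x). field. lra. }
  rewrite (RInt_ext _ _ _ _ Hext2).
  specialize (HC N HN).
  assert (Rabs (RInt F 0 delta + RInt (fun y => g y * hh y * sin (N * PI * y)) delta (1 / 2)) <=
     Rabs (RInt F 0 delta) + Rabs (RInt (fun y => g y * hh y * sin (N * PI * y)) delta (1 / 2)))
    by apply Rabs_triang.
  lra.
Qed.

Lemma per_int (H : R -> R) : (forall y, H (y + 1) = H y) -> forall n y, H (y + IZR n) = H y.
Proof.
  intros Hp.
  assert (Hn : forall k y, H (y + INR k) = H y).
  { induction k; intros y. - simpl; rewrite Rplus_0_r; auto.
    - rewrite S_INR. replace (y + (INR k + 1)) with ((y + INR k) + 1) by ring. rewrite Hp; auto. }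
  intros n y. destruct (Z_lt_le_dec n 0).
  - replace (IZR n) with (- INR (Z.to_nat (- n))).
    + rewrite <- (Hn (Z.to_nat (- n)) (y + - INR (Z.to_nat (- n)))). f_equal; ring.
    + rewrite INR_IZR_INZ, Z2Nat.id by lia. rewrite opp_IZR. ring.
  - replace (IZR n) with (INR (Z.to_nat n)); auto.
    rewrite INR_IZR_INZ, Z2Nat.id by lia. auto.
Qed.

Lemma RInt_shift (H : R -> R) : (forall y, H (y + 1) = H y) -> (forall c d, ex_RInt H c d) ->
  forall n c d, RInt H (c + IZR n) (d + IZR n) = RInt H c d.
Proof.
  intros Hp Hex n c d.
  pose proof (RInt_comp_lin H 1 (IZR n) c d) as E.
  replace (1 * c + IZR n) with (c + IZR n) in E by ring.
  replace (1 * d + IZR n) with (d + IZR n) in E by ring.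
  rewrite <- E by auto. apply RInt_ext'. intros y.
  change (scal 1 ?a) with (1 * a). rewrite Rmult_1_l. replace (1 * y + IZR n) with (y + IZR n) by ring.
  apply per_int; auto.
Qed.

Lemma RInt_period (H : R -> R) : (forall y, H (y + 1) = H y) -> (forall c d, ex_RInt H c d) ->
  forall a, RInt H a (a + 1) = RInt H 0 1.
Proof.
  intros Hp Hex a.
  set (n := (up a - 1)%Z). set (r := a - IZR n).
  rewrite <- (RInt_Chasles H a (IZR n + 1) (a + 1)) by auto.
  replace a with (r + IZR n) at 1 by (unfold r; ring).
  replace (IZR n + 1) with (1 + IZR n) at 1 by ring.
  rewrite RInt_shift by auto.
  replace (IZR n + 1) with (0 + IZR (n + 1)) by (rewrite plus_IZR; ring).
  replace (a + 1) with (r + IZR (n + 1)) by (unfold r; rewrite plus_IZR; ring).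
  rewrite RInt_shift by auto.
  change (plus ?x ?y) with (x + y). rewrite Rplus_comm.
  change (RInt H 0 r + RInt H r 1 = RInt H 0 1).
  exact (RInt_Chasles H 0 r 1 (Hex _ _) (Hex _ _)).
Qed.

Lemma Dk_per K z : Dk K (z + 1) = Dk K z.
Proof.
  induction K; cbn [Dk]; auto. rewrite IHK. f_equal. f_equal.
  replace (2 * PI * INR (S K) * (z + 1)) with (2 * PI * INR (S K) * z + 2 * INR (S K) * PI) by ring.
  apply cos_period.
Qed.

Lemma at_right_shift x (P : R -> Prop) : at_right x P -> at_right 0 (fun z => P (x + z)).
Proof.
  intros [e He]. exists e. intros y Hy Hy0. apply He.
  - apply ball_R. apply ball_R in Hy. replace (x + y - x) with (y - 0) by ring. auto.
  - lra.
Qed.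

Lemma at_left_refl x (P : R -> Prop) : at_left x P -> at_right 0 (fun z => P (x - z)).
Proof.
  intros [e He]. exists e. intros y Hy Hy0. apply He.
  - apply ball_R. apply ball_R in Hy. replace (x - y - x) with (- (y - 0)) by ring.
    rewrite Rabs_Ropp; auto.
  - lra.
Qed.

Lemma ex_all (g h : R -> R) L B : (forall c d, c <= d -> PW c d g L B) -> (forall y, continuous h y) ->
  forall c d, ex_RInt (fun y => g y * h y) c d.
Proof.
  intros HP Hh c d. destruct (Rle_lt_dec c d).
  - apply (PW_int c d g L B h); auto.
  - apply ex_RInt_swap. apply (PW_int d c g L B h); [apply HP; lra | lra | auto].
Qed.

Lemma cont_Dk_lin K a b y : continuous (fun z => Dk K (a * z + b)) y.
Proof.
  apply cont_pt. apply (continuity_pt_comp (fun z => a * z + b) (Dk K)).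
  - apply continuity_pt_plus; [apply continuity_pt_scal, continuity_pt_id | apply continuity_pt_const; intros ? ?; auto].
  - apply pt_cont, Dk_cont.
Qed.

Lemma Dir_real (phi : R -> R) L B lp lm x :
  (forall y, phi (y + 1) = phi y) -> (forall c d, c <= d -> PW c d phi L B) ->
  filterlim phi (at_right x) (locally lp) -> filterlim phi (at_left x) (locally lm) ->
  phi x = (lp + lm) / 2 ->
  forall eps, 0 < eps -> exists K0, forall K, (K0 <= K)%nat ->
    Rabs (RInt (fun y => phi y * Dk K (x - y)) 0 1 - phi x) < eps.
Proof.
  intros Hper HPW Hr Hl Hx eps Heps.
  assert (HPr : PW x (x + 1/2) phi L B) by (apply HPW; lra).
  assert (Hr' : filterlim (fun z => phi (x + z)) (at_right 0) (locally lp)).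
  { intros P HP. apply (at_right_shift x (fun y => P (phi y))). apply Hr; auto. }
  destruct (B3 phi x lp L B HPr Hr' (eps/2) ltac:(lra)) as [K1 HK1].
  set (psi := fun y => phi (- y)).
  assert (HPl : PW (-x) (-x + 1/2) psi L B).
  { pose proof (PW_reflect _ _ _ _ _ (HPW (x - 1/2) x ltac:(lra))) as H.
    replace (- (x - 1/2)) with (-x + 1/2) in H by ring. exact H. }
  assert (Hl' : filterlim (fun z => psi (-x + z)) (at_right 0) (locally lm)).
  { replace (fun z => psi (-x + z)) with (fun z => phi (x - z)).
    - intros P HP. apply (at_left_refl x (fun y => P (phi y))). apply Hl; auto.
    - apply functional_extensionality; intros z; unfold psi; f_equal; ring. }
  destruct (B3 psi (-x) lm L B HPl Hl' (eps/2) ltac:(lra)) as [K2 HK2].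
  exists (Nat.max K1 K2). intros K HK.
  specialize (HK1 K ltac:(lia)). specialize (HK2 K ltac:(lia)).
  replace (RInt (fun z : R => (psi (- x + z) - lm) * Dk K z) 0 (1 / 2)) with
    (RInt (fun z : R => (phi (x - z) - lm) * Dk K z) 0 (1 / 2)) in HK2
    by (apply RInt_ext'; intros z; unfold psi; do 3 f_equal; ring).
  set (A := fun z => phi (x + z) * Dk K z).
  set (Am := fun z => phi (x - z) * Dk K z).
  assert (HPA : forall c d, c <= d -> PW c d (fun z => phi (x + z)) L B).
  { intros c d Hcd. apply (PW_ext _ _ (fun z => phi (z + x))); [intros; f_equal; ring|].
    pose proof (PW_shift _ _ _ _ _ x (HPW (c + x) (d + x) ltac:(lra))) as H.
    replace (c + x - x) with c in H by ring. replace (d + x - x) with d in H by ring. exact H. }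
  assert (HPAm : forall c d, c <= d -> PW c d (fun z => phi (x - z)) L B).
  { intros c d Hcd. apply (PW_ext _ _ (fun z => (fun y => phi (y + x)) (- z))); [intros; simpl; f_equal; ring|].
    pose proof (PW_reflect _ _ _ _ _ (HPA (-d) (-c) ltac:(lra))) as H.
    apply (PW_ext _ _ _ (fun y => phi (- y + x))) in H; [|intros; simpl; f_equal; ring].
    rewrite !Ropp_involutive in H. exact H. }
  assert (HexA : forall c d, ex_RInt A c d).
  { intros. apply (ex_all (fun z => phi (x + z)) (Dk K) L B); auto. apply Dk_cont. }
  assert (HexAm : forall c d, ex_RInt Am c d).
  { intros. apply (ex_all (fun z => phi (x - z)) (Dk K) L B); auto. apply Dk_cont. }
  assert (HexD : forall c d, ex_RInt (Dk K) c d).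
  { intros. apply exR_cont. intros; apply Dk_cont. }
  set (H := fun y => phi y * Dk K (x - y)).
  assert (HexH : forall c d, ex_RInt H c d).
  { intros. apply (ex_all phi (fun y => Dk K (x - y)) L B); auto.
    intros y. replace (fun y => Dk K (x - y)) with (fun y => Dk K (-1 * y + x))
      by (apply functional_extensionality; intros; f_equal; ring).
    apply cont_Dk_lin. }
  assert (HperH : forall y, H (y + 1) = H y).
  { intros y. unfold H. rewrite Hper. f_equal. rewrite <- (Dk_per K (x - (y + 1))). f_equal; ring. }
  assert (E1 : RInt H 0 1 = RInt A (-1/2) (1/2)).
  { rewrite <- (RInt_period H HperH HexH (x - 1/2)).
    pose proof (RInt_comp_lin H 1 x (-1/2) (1/2)) as E.
    replace (1 * (-1/2) + x) with (x - 1/2) in E by field.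
    replace (1 * (1/2) + x) with (x - 1/2 + 1) in E by field.
    rewrite <- E by auto. apply RInt_ext'. intros z.
    change (scal 1 ?a) with (1 * a). unfold H, A.
    replace (x - (1 * z + x)) with (- z) by ring. rewrite Dk_even.
    replace (1 * z + x) with (x + z) by ring. ring. }
  assert (E2 : RInt A (-1/2) 0 = RInt Am 0 (1/2)).
  { pose proof (RInt_comp_lin A (-1) 0 0 (1/2)) as E.
    replace (-1 * 0 + 0) with 0 in E by ring.
    replace (-1 * (1/2) + 0) with (-1/2) in E by field.
    rewrite <- (opp_RInt_swap A 0 (-1/2)) by auto.
    rewrite <- E by auto.
    transitivity (opp (RInt (fun y => opp (Am y)) 0 (1/2))).
    - f_equal. apply RInt_ext'. intros z.
      change (scal (-1) ?a) with (-1 * a). change (opp ?a) with (- a). unfold A, Am.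
      replace (-1 * z + 0) with (- z) by ring. rewrite Dk_even. replace (x + - z) with (x - z) by ring.
      ring.
    - rewrite (RInt_opp Am) by auto. apply opp_opp. }
  assert (E3 : RInt A (-1/2) (1/2) = RInt A (-1/2) 0 + RInt A 0 (1/2)).
  { symmetry. exact (RInt_Chasles A (-1/2) 0 (1/2) (HexA _ _) (HexA _ _)). }
  assert (HD : RInt (Dk K) 0 (1/2) = 1/2) by (apply is_RInt_unique; apply Dk_int).
  assert (EP : RInt (fun z => (phi (x + z) - lp) * Dk K z) 0 (1/2) = RInt A 0 (1/2) - lp * (1/2)).
  { transitivity (RInt (fun z => minus (A z) (scal lp (Dk K z))) 0 (1/2)).
    - apply RInt_ext'. intros z. change (minus ?a ?b) with (a - b). change (scal ?a ?b) with (a * b).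
      unfold A. ring.
    - assert (Q := RInt_minus A (fun z => scal lp (Dk K z)) 0 (1/2) (HexA _ _) (ex_RInt_scal _ _ _ _ (HexD 0 (1/2)))).
      assert (Q2 := RInt_scal (Dk K) 0 (1/2) lp (HexD 0 (1/2))).
      etransitivity; [exact Q|]. etransitivity; [apply f_equal; exact Q2|].
      rewrite HD. reflexivity. }
  assert (EM : RInt (fun z => (phi (x - z) - lm) * Dk K z) 0 (1/2) = RInt Am 0 (1/2) - lm * (1/2)).
  { transitivity (RInt (fun z => minus (Am z) (scal lm (Dk K z))) 0 (1/2)).
    - apply RInt_ext'. intros z. change (minus ?a ?b) with (a - b). change (scal ?a ?b) with (a * b).
      unfold Am. ring.
    - assert (Q := RInt_minus Am (fun z => scal lm (Dk K z)) 0 (1/2) (HexAm _ _) (ex_RInt_scal _ _ _ _ (HexD 0 (1/2)))).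
      assert (Q2 := RInt_scal (Dk K) 0 (1/2) lm (HexD 0 (1/2))).
      etransitivity; [exact Q|]. etransitivity; [apply f_equal; exact Q2|].
      rewrite HD. reflexivity. }
  change (Rabs (RInt H 0 1 - phi x) < eps).
  replace (RInt H 0 1 - phi x) with
    (RInt (fun z => (phi (x + z) - lp) * Dk K z) 0 (1/2) + RInt (fun z => (phi (x - z) - lm) * Dk K z) 0 (1/2)).
  - eapply Rle_lt_trans; [apply Rabs_triang|]. lra.
  - rewrite EP, EM, E1, E3, E2, Hx. field.
Qed.

Definition comp (b : bool) (z : C) : R := if b then fst z else snd z.

Lemma comp_lim {T} (F : (T -> Prop) -> Prop) (g : T -> C) l b :
  filterlim g F (locally l) -> filterlim (fun y => comp b (g y)) F (locally (comp b l)).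
Proof.
  intros Hg P [e He]. apply (Hg (fun w => P (comp b w))). exists e. intros w Hw. apply He.
  destruct Hw as [H1 H2]. destruct b; simpl; auto.
Qed.

Lemma comp_derive (g : R -> C) x l b :
  @is_derive R_AbsRing C_R_NormedModule g x l -> is_derive (fun y => comp b (g y)) x (comp b l).
Proof.
  intros H. destruct b; simpl.
  - pose proof (filterdiff_comp g (fun t : C_R_NormedModule => fst t) _ (fun t => fst t) H
       (filterdiff_linear _ is_linear_fst)) as H2.
    apply (filterdiff_ext_lin _ _ _ H2). intros y. reflexivity.
  - pose proof (filterdiff_comp g (fun t : C_R_NormedModule => snd t) _ (fun t => snd t) H
       (filterdiff_linear _ is_linear_snd)) as H2.
    apply (filterdiff_ext_lin _ _ _ H2). intros y. reflexivity.
Qed.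

Lemma comp_cont (g : R -> C) x b :
  @continuous R_UniformSpace C_R_NormedModule g x -> continuous (fun y => comp b (g y)) x.
Proof. intros H. apply (comp_lim (locally x) g (g x) b H). Qed.

Lemma piece_PW (g : R -> C) (a0 a1 : R) (g' : R -> C) b :
  a0 < a1 ->
  (forall x, a0 < x < a1 -> @is_derive R_AbsRing C_R_NormedModule g x (g' x) /\ continuous g' x) ->
  (exists l, right_lim g a0 l) -> (exists l, left_lim g a1 l) ->
  (exists l, right_lim g' a0 l) -> (exists l, left_lim g' a1 l) ->
  exists M, exists G : R -> R, (forall y, a0 < y < a1 -> G y = comp b (g y)) /\
    (forall y z, Rabs (G y - G z) <= M * Rabs (y - z)) /\ (forall y, Rabs (G y) <= M).
Proof.
  intros Ha Hd [l1 Hl1] [l2 Hl2] [l3 Hl3] [l4 Hl4].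
  set (phi := fun y => comp b (g y)). set (phi' := fun y => comp b (g' y)).
  destruct (C0_extension_lt phi (comp b l1) (comp b l2) a0 a1 Ha) as [G [HGc [HGe _]]].
  { intros c Hc. apply comp_cont. apply ex_derive_continuous. exists (g' c). apply Hd; auto. }
  { apply comp_lim; auto. }
  { apply comp_lim; auto. }
  destruct (C0_extension_lt phi' (comp b l3) (comp b l4) a0 a1 Ha) as [G' [HG'c [HG'e _]]].
  { intros c Hc. apply comp_cont. apply Hd; auto. }
  { apply comp_lim; auto. }
  { apply comp_lim; auto. }
  destruct (continuity_ab_maj (fun y => Rabs (G' y)) a0 a1 ltac:(lra)) as [xm [HM _]].
  { intros c _. apply continuity_pt_filterlim. apply (continuous_comp G' Rabs).
    apply HG'c. apply continuous_Rabs. }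
  destruct (continuity_ab_maj (fun y => Rabs (G y)) a0 a1 ltac:(lra)) as [xb [HB _]].
  { intros c _. apply continuity_pt_filterlim. apply (continuous_comp G Rabs).
    apply HGc. apply continuous_Rabs. }
  set (M := Rmax (Rabs (G' xm)) (Rabs (G xb))).
  exists M, (fun y => G (clamp a0 a1 y)). split; [|split].
  - intros y Hy. rewrite clamp_id by lra. apply HGe; auto.
  - intros y z.
    assert (Hlip : forall u v, a0 <= u <= a1 -> a0 <= v <= a1 -> Rabs (G u - G v) <= M * Rabs (u - v)).
    { intros u v Hu Hv.
      destruct (MVT_gen G v u G') as [c [Hc E]].
      - intros x Hx. 
        assert (Hx' : a0 < x < a1).
        { unfold Rmin, Rmax in Hx; destruct Rle_dec; lra. }
        apply (is_derive_ext_loc phi).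
        + set (r := Rmin (x - a0) (a1 - x)).
          assert (Hr : 0 < r) by (unfold r; apply Rmin_glb_lt; lra).
          exists (mkposreal r Hr). intros t Ht0. pose proof (proj1 (ball_R _ _ _) Ht0) as Ht. simpl in Ht.
          assert (r <= x - a0) by apply Rmin_l. assert (r <= a1 - x) by apply Rmin_r.
          apply Rabs_def2 in Ht. symmetry. apply HGe. lra.
        + rewrite HG'e by auto. apply comp_derive. apply Hd; auto.
      - intros x _. apply continuity_pt_filterlim. apply HGc.
      - rewrite E. rewrite Rabs_mult.
        assert (Hc' : a0 <= c <= a1) by (unfold Rmin, Rmax in Hc; destruct Rle_dec; lra).
        assert (Rabs (G' c) <= M) by (eapply Rle_trans; [apply HM; auto | apply Rmax_l]).
        apply Rmult_le_compat_r; [apply Rabs_pos | auto]. }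
    eapply Rle_trans; [apply Hlip; apply clamp_in; lra|].
    apply Rmult_le_compat_l; [|apply clamp_lip].
    eapply Rle_trans; [apply Rabs_pos | apply Rmax_l].
  - intros y. eapply Rle_trans; [apply HB; apply clamp_in; lra | apply Rmax_r].
Qed.

Lemma fin_max (P : nat -> R -> Prop) n : (forall i, (i < n)%nat -> exists M, P i M) ->
  (forall i M M', P i M -> M <= M' -> P i M') -> exists M, forall i, (i < n)%nat -> P i M.
Proof.
  intros H Hm. induction n.
  - exists 0. intros; lia.
  - destruct IHn as [M1 HM1]; [intros; apply H; lia|].
    destruct (H n ltac:(lia)) as [M2 HM2].
    exists (Rmax M1 M2). intros i Hi. destruct (Nat.eq_dec i n).
    + subst. apply (Hm _ M2); auto. apply Rmax_r.
    + apply (Hm _ M1); [apply HM1; lia | apply Rmax_l].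
Qed.

Lemma PW_point c g L B : PW c c g L B.
Proof. exists 0%nat, (fun _ => c). repeat split; intros; lia. Qed.

Lemma classD_PW01 f b : class_D f -> exists M, PW 0 1 (fun y => comp b (f y)) M M.
Proof.
  intros [_ [_ [[n [a [Ha0 [Han [Hmon Hp]]]]] _]]].
  set (P := fun i M => exists G : R -> R, (forall y, a i < y < a (S i) -> G y = comp b (f y)) /\
    (forall y z, Rabs (G y - G z) <= M * Rabs (y - z)) /\ (forall y, Rabs (G y) <= M)).
  destruct (fin_max P n) as [M HM].
  - intros i Hi. destruct (Hp i Hi) as [f' [Hd [H1 [H2 [H3 H4]]]]].
    apply (piece_PW f (a i) (a (S i)) f' b (Hmon i Hi) Hd H1 H2 H3 H4).
  - intros i M M' [G [HG1 [HG2 HG3]]] HMM. exists G. split; [auto|split].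
    + intros y z. eapply Rle_trans; [apply HG2|]. apply Rmult_le_compat_r; [apply Rabs_pos|auto].
    + intros y; eapply Rle_trans; [apply HG3|auto].
  - exists M, n, a. split; [auto|split; [auto|split]].
    + intros j Hj; left; auto.
    + intros j Hj. apply HM; auto.
Qed.

Lemma classD_PW f b : class_D f -> exists M, forall c d, c <= d -> PW c d (fun y => comp b (f y)) M M.
Proof.
  intros HD. destruct (classD_PW01 f b HD) as [M HM]. exists M.
  set (phi := fun y => comp b (f y)).
  assert (Hper : forall y, phi (y + 1) = phi y).
  { intros y. unfold phi. destruct HD as [_ [Hp _]]. rewrite Hp. auto. }
  assert (Hn : forall n : Z, PW (IZR n) (IZR n + 1) phi M M).
  { intros n. pose proof (PW_shift _ _ _ _ _ (- IZR n) HM) as H.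
    replace (0 - - IZR n) with (IZR n) in H by ring. replace (1 - - IZR n) with (IZR n + 1) in H by ring.
    apply (PW_ext _ _ _ phi) in H; auto. intros y. rewrite <- opp_IZR. apply (per_int phi Hper). }
  assert (Hk : forall k : nat, PW (- INR k) (INR k) phi M M).
  { induction k.
    - simpl. rewrite Ropp_0. apply PW_point.
    - rewrite S_INR. apply (PW_concat _ (- INR k)).
      + pose proof (Hn (- Z.of_nat (S k))%Z) as H. rewrite opp_IZR, <- INR_IZR_INZ, S_INR in H.
        replace (- (INR k + 1) + 1) with (- INR k) in H by ring.
        replace (- (INR k + 1)) with (- INR k - 1) by ring.
        replace (- (INR k + 1)) with (- INR k - 1) in H by ring. exact H.
      + apply (PW_concat _ (INR k)); auto.
        pose proof (Hn (Z.of_nat k)) as H. rewrite <- INR_IZR_INZ in H. exact H. }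
  intros c d Hcd.
  set (k := Z.to_nat (up (Rabs c + Rabs d))).
  assert (Hkk : Rabs c + Rabs d <= INR k).
  { unfold k. destruct (archimed (Rabs c + Rabs d)) as [Ha _].
    pose proof (Rabs_pos c). pose proof (Rabs_pos d).
    assert (0 <= up (Rabs c + Rabs d))%Z.
    { apply le_IZR. lra. }
    rewrite INR_IZR_INZ, Z2Nat.id by auto. lra. }
  apply (PW_restrict (- INR k) (INR k)); auto.
  - pose proof (Rabs_pos d). pose proof (Rle_abs (- c)). rewrite Rabs_Ropp in *. lra.
  - pose proof (Rabs_pos c). pose proof (Rle_abs d). lra.
Qed.

Lemma C_eq (a b : C) : fst a = fst b -> snd a = snd b -> a = b.
Proof. destruct a, b; simpl; intros; subst; auto. Qed.

Ltac Csimpl := apply C_eq; unfold Cmult, Cplus, RtoC; simpl.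

Lemma CRInt_pair (g : R -> C) a b : ex_RInt (fun y => fst (g y)) a b -> ex_RInt (fun y => snd (g y)) a b ->
  @RInt C_R_CompleteNormedModule g a b = (RInt (fun y => fst (g y)) a b, RInt (fun y => snd (g y)) a b).
Proof.
  intros H1 H2. apply is_RInt_unique.
  apply (@is_RInt_fct_extend_pair R_NormedModule R_NormedModule g a b);
  apply (@RInt_correct R_CompleteNormedModule); auto.
Qed.

Lemma ex_C (g : R -> C) a b : ex_RInt (fun y => fst (g y)) a b -> ex_RInt (fun y => snd (g y)) a b ->
  @ex_RInt C_R_NormedModule g a b.
Proof. intros; apply (@ex_RInt_fct_extend_pair R_NormedModule R_NormedModule); auto. Qed.

Lemma ex_C_fst (g : R -> C) a b : @ex_RInt C_R_NormedModule g a b -> ex_RInt (fun y => fst (g y)) a b.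
Proof. intros H. apply (@ex_RInt_fct_extend_fst R_NormedModule R_NormedModule g a b H). Qed.
Lemma ex_C_snd (g : R -> C) a b : @ex_RInt C_R_NormedModule g a b -> ex_RInt (fun y => snd (g y)) a b.
Proof. intros H. apply (@ex_RInt_fct_extend_snd R_NormedModule R_NormedModule g a b H). Qed.

Lemma RInt_ext_R (f g : R -> R) a b : (forall x, f x = g x) -> RInt f a b = RInt g a b.
Proof. intros H. replace g with f by (apply functional_extensionality; auto). auto. Qed.

Lemma exR_ext (f g : R -> R) a b : (forall x, f x = g x) -> ex_RInt f a b -> ex_RInt g a b.
Proof. intros H. replace g with f by (apply functional_extensionality; auto). auto. Qed.

Lemma RInt_lin2 (f g : R -> R) a b c1 c2 : ex_RInt f a b -> ex_RInt g a b ->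
  RInt (fun y => c1 * f y + c2 * g y) a b = c1 * RInt f a b + c2 * RInt g a b.
Proof.
  intros Hf Hg. apply is_RInt_unique.
  apply (@is_RInt_plus R_NormedModule (fun y => c1 * f y) (fun y => c2 * g y)).
  - apply (@is_RInt_scal R_NormedModule f). apply (@RInt_correct R_CompleteNormedModule); auto.
  - apply (@is_RInt_scal R_NormedModule g). apply (@RInt_correct R_CompleteNormedModule); auto.
Qed.

Lemma ex_lin2 (f g : R -> R) a b c1 c2 : ex_RInt f a b -> ex_RInt g a b ->
  ex_RInt (fun y => c1 * f y + c2 * g y) a b.
Proof.
  intros Hf Hg. apply (@ex_RInt_plus R_NormedModule (fun y => c1 * f y) (fun y => c2 * g y)).
  - apply (@ex_RInt_scal R_NormedModule f); auto.
  - apply (@ex_RInt_scal R_NormedModule g); auto.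
Qed.

Lemma CRInt_mulc (g : R -> C) a b c : @ex_RInt C_R_NormedModule g a b ->
  @RInt C_R_CompleteNormedModule (fun y => Cmult (g y) c) a b = Cmult (@RInt C_R_CompleteNormedModule g a b) c.
Proof.
  intros H. pose proof (ex_C_fst g a b H) as H1. pose proof (ex_C_snd g a b H) as H2.
  destruct c as [c1 c2].
  rewrite CRInt_pair; auto.
  - rewrite CRInt_pair; auto. Csimpl.
    + transitivity (c1 * RInt (fun y => fst (g y)) a b + (-c2) * RInt (fun y => snd (g y)) a b); [|ring].
      rewrite <- RInt_lin2 by auto. apply RInt_ext_R; intros; simpl; ring.
    + transitivity (c2 * RInt (fun y => fst (g y)) a b + c1 * RInt (fun y => snd (g y)) a b); [|ring].
      rewrite <- RInt_lin2 by auto. apply RInt_ext_R; intros; simpl; ring.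
  - apply (exR_ext (fun y => c1 * fst (g y) + (- c2) * snd (g y))); [intros; simpl; ring|].
    apply ex_lin2; auto.
  - apply (exR_ext (fun y => c2 * fst (g y) + c1 * snd (g y))); [intros; simpl; ring|].
    apply ex_lin2; auto.
Qed.

Fixpoint CsumF (l : list Z) (G : Z -> R -> C) (y : R) : C :=
  match l with nil => RtoC 0 | k :: l' => Cplus (G k y) (CsumF l' G y) end.

Lemma CsumF_eq l G y : CsumF l G y = Csum (map (fun k => G k y) l).
Proof. induction l; simpl; auto. rewrite IHl. auto. Qed.

Lemma Csum_cons x l : Csum (x :: l) = Cplus x (Csum l).
Proof. reflexivity. Qed.

Lemma CRInt_sum (l : list Z) (G : Z -> R -> C) a b : (forall k, @ex_RInt C_R_NormedModule (G k) a b) ->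
  Csum (map (fun k => @RInt C_R_CompleteNormedModule (G k) a b) l) =
  @RInt C_R_CompleteNormedModule (fun y => Csum (map (fun k => G k y) l)) a b /\
  @ex_RInt C_R_NormedModule (fun y => Csum (map (fun k => G k y) l)) a b.
Proof.
  intros Hex. induction l; cbn [map].
  - assert (Hex0 : ex_RInt (fun _ : R => 0) a b) by apply ex_RInt_const.
    assert (HR0 : RInt (fun _ : R => 0) a b = 0).
    { rewrite RInt_const. change ((b - a) * 0 = 0). ring. }
    split.
    + rewrite CRInt_pair by (simpl; auto). apply C_eq; simpl; auto.
    + apply ex_C; simpl; auto.
  - destruct IHl as [IH1 IH2]. rewrite !Csum_cons. split.
    + rewrite IH1. symmetry.
      exact (@RInt_plus C_R_CompleteNormedModule (G a0) (fun y => Csum (map (fun k => G k y) l)) a b (Hex a0) IH2).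
    + exact (@ex_RInt_plus C_R_NormedModule (G a0) (fun y => Csum (map (fun k => G k y) l)) a b (Hex a0) IH2).
Qed.

Lemma Csum_mult_l (l : list Z) (g : Z -> C) c : Csum (map (fun k => Cmult c (g k)) l) = Cmult c (Csum (map g l)).
Proof. induction l; simpl. - Csimpl; ring. - rewrite IHl. Csimpl; ring. Qed.

Lemma Csum_app l1 l2 : Csum (l1 ++ l2) = Cplus (Csum l1) (Csum l2).
Proof. induction l1; simpl. - Csimpl; ring. - rewrite IHl1. Csimpl; ring. Qed.

Lemma symrange_S K : symrange (S K) = (- Z.of_nat (S K))%Z :: symrange K ++ (Z.of_nat (S K) :: nil).
Proof.
  unfold symrange. replace (2 * S K + 1)%nat with (S (S (2 * K + 1))) by lia.
  rewrite seq_S. cbn [seq map app]. f_equal; try lia.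
  rewrite map_app. f_equal.
  - rewrite <- seq_shift, map_map. apply map_ext. intros; lia.
  - cbn [map]. f_equal. lia.
Qed.

Lemma e_plus a b : e (a + b) = Cmult (e a) (e b).
Proof.
  unfold e. Csimpl.
  - rewrite <- cos_plus. f_equal; ring.
  - replace (2 * PI * (a + b)) with (2 * PI * a + 2 * PI * b) by ring. rewrite sin_plus. ring.
Qed.

Lemma sum_e K z : Csum (map (fun k => e (IZR k * z)) (symrange K)) = RtoC (Dk K z).
Proof.
  induction K.
  - unfold symrange. simpl. unfold e. Csimpl.
    + rewrite Rmult_0_l, Rmult_0_r, cos_0. ring.
    + rewrite Rmult_0_l, Rmult_0_r, sin_0. ring.
  - rewrite symrange_S. cbn [map]. rewrite Csum_cons, map_app, Csum_app. cbn [map].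
    rewrite Csum_cons. change (Csum nil) with (RtoC 0). rewrite IHK.
    cbn [Dk]. unfold e. rewrite opp_IZR, <- INR_IZR_INZ. set (t := INR (S K)). Csimpl.
    + replace (2 * PI * (- t * z)) with (- (2 * PI * t * z)) by ring.
      replace (2 * PI * (t * z)) with (2 * PI * t * z) by ring.
      rewrite cos_neg. ring.
    + replace (2 * PI * (- t * z)) with (- (2 * PI * (t * z))) by ring.
      rewrite sin_neg. ring.
Qed.

Lemma classD_dir f b x : class_D f -> forall eps, 0 < eps -> exists K0, forall K, (K0 <= K)%nat ->
  Rabs (RInt (fun y => comp b (f y) * Dk K (x - y)) 0 1 - comp b (f x)) < eps.
Proof.
  intros HD. destruct (classD_PW f b HD) as [M HM].
  destruct HD as [_ [Hper [_ Hlim]]].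
  destruct (Hlim x) as [lp [lm [Hr [Hl Hx]]]].
  apply (Dir_real (fun y => comp b (f y)) M M (comp b lp) (comp b lm) x).
  - intros y; rewrite Hper; auto.
  - auto.
  - apply comp_lim; auto.
  - apply comp_lim; auto.
  - rewrite Hx. destruct b; simpl; field.
Qed.

Definition SKc (f : R -> C) (x : R) (K : nat) : C :=
  Csum (map (fun k => Cmult (fourier_coeff f k) (e (IZR k * x))) (symrange K)).

Lemma RInt_ext_C (F G : R -> C) a b : (forall y, F y = G y) ->
  @RInt C_R_CompleteNormedModule F a b = @RInt C_R_CompleteNormedModule G a b.
Proof. intros H. replace G with F by (apply functional_extensionality; auto). auto. Qed.

Lemma cont_cos_aff a c y : continuous (fun z => cos (a * z + c)) y.
Proof.
  apply cont_pt. apply (continuity_pt_comp (fun z => a * z + c) cos).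
  - apply continuity_pt_plus; [apply continuity_pt_scal, continuity_pt_id | apply continuity_pt_const; intros ? ?; auto].
  - apply continuity_cos.
Qed.

Lemma cont_sin_aff a c y : continuous (fun z => sin (a * z + c)) y.
Proof.
  apply cont_pt. apply (continuity_pt_comp (fun z => a * z + c) sin).
  - apply continuity_pt_plus; [apply continuity_pt_scal, continuity_pt_id | apply continuity_pt_const; intros ? ?; auto].
  - apply continuity_sin.
Qed.

Lemma ex_fh f (h : R -> C) : class_D f -> (forall y, continuous (fun z => fst (h z)) y) ->
  (forall y, continuous (fun z => snd (h z)) y) ->
  forall a b, @ex_RInt C_R_NormedModule (fun y => Cmult (f y) (h y)) a b.
Proof.
  intros HD H1 H2 a b.
  destruct (classD_PW f true HD) as [M1 HM1]. destruct (classD_PW f false HD) as [M2 HM2].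
  apply ex_C.
  - apply (exR_ext (fun y => 1 * (comp true (f y) * fst (h y)) + (-1) * (comp false (f y) * snd (h y)))).
    + intros; simpl; ring.
    + apply ex_lin2; [apply (ex_all _ (fun y => fst (h y)) _ _ HM1) | apply (ex_all _ (fun y => snd (h y)) _ _ HM2)]; auto.
  - apply (exR_ext (fun y => 1 * (comp true (f y) * snd (h y)) + 1 * (comp false (f y) * fst (h y)))).
    + intros; simpl; ring.
    + apply ex_lin2; [apply (ex_all _ (fun y => snd (h y)) _ _ HM1) | apply (ex_all _ (fun y => fst (h y)) _ _ HM2)]; auto.
Qed.

Lemma SKc_eq f x K : class_D f -> SKc f x K =
  (RInt (fun y => comp true (f y) * Dk K (x - y)) 0 1, RInt (fun y => comp false (f y) * Dk K (x - y)) 0 1).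
Proof.
  intros HD. unfold SKc, fourier_coeff.
  set (G := fun (k : Z) (y : R) => Cmult (f y) (e (IZR k * (x - y)))).
  assert (HexG : forall k, @ex_RInt C_R_NormedModule (G k) 0 1).
  { intros k. unfold G. apply ex_fh; auto.
    - intros y. simpl. 
      replace (fun z => cos (2 * PI * (IZR k * (x - z)))) with (fun z => cos ((- (2 * PI * IZR k)) * z + 2 * PI * IZR k * x))
        by (apply functional_extensionality; intros; f_equal; ring).
      apply cont_cos_aff.
    - intros y. simpl.
      replace (fun z => sin (2 * PI * (IZR k * (x - z)))) with (fun z => sin ((- (2 * PI * IZR k)) * z + 2 * PI * IZR k * x))
        by (apply functional_extensionality; intros; f_equal; ring).
      apply cont_sin_aff. }
  rewrite (map_ext _ (fun k => @RInt C_R_CompleteNormedModule (G k) 0 1)).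
  2: { intros k. rewrite <- CRInt_mulc.
    - apply RInt_ext_C. intros y. unfold G.
      replace (IZR k * (x - y)) with (- (IZR k * y) + IZR k * x) by ring. rewrite e_plus.
      Csimpl; ring.
    - apply ex_fh; auto.
      + intros y. simpl.
        replace (fun z => cos (2 * PI * - (IZR k * z))) with (fun z => cos ((- (2 * PI * IZR k)) * z + 0))
          by (apply functional_extensionality; intros; f_equal; ring).
        apply cont_cos_aff.
      + intros y. simpl.
        replace (fun z => sin (2 * PI * - (IZR k * z))) with (fun z => sin ((- (2 * PI * IZR k)) * z + 0))
          by (apply functional_extensionality; intros; f_equal; ring).
        apply cont_sin_aff. }
  destruct (CRInt_sum (symrange K) G 0 1 HexG) as [E1 _]. rewrite E1.
  rewrite (RInt_ext_C _ (fun y => Cmult (f y) (RtoC (Dk K (x - y))))).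
  2: { intros y. unfold G. rewrite Csum_mult_l. rewrite sum_e. auto. }
  destruct (classD_PW f true HD) as [M1 HM1]. destruct (classD_PW f false HD) as [M2 HM2].
  assert (Hc : forall y, continuous (fun y => Dk K (x - y)) y).
  { intros y. apply cont_pt. apply (continuity_pt_comp (fun y => x - y) (Dk K)).
    - apply continuity_pt_minus; [apply continuity_pt_const; intros ? ?; auto | apply continuity_pt_id].
    - apply pt_cont, Dk_cont. }
  assert (E := ex_all _ _ _ _ HM1 Hc 0 1). assert (E' := ex_all _ _ _ _ HM2 Hc 0 1).
  rewrite CRInt_pair.
  - apply C_eq; simpl.
    + apply RInt_ext_R. intros; simpl; ring.
    + apply RInt_ext_R. intros; simpl; ring.
  - apply (exR_ext (fun y => comp true (f y) * Dk K (x - y))); auto. intros; simpl; ring.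
  - apply (exR_ext (fun y => comp false (f y) * Dk K (x - y))); auto. intros; simpl; ring.
Qed.

Lemma SKc_lim f x : class_D f -> filterlim (SKc f x) eventually (locally (f x)).
Proof.
  intros HD P [eps HP].
  destruct (classD_dir f true x HD eps (cond_pos eps)) as [K1 HK1].
  destruct (classD_dir f false x HD eps (cond_pos eps)) as [K2 HK2].
  exists (Nat.max K1 K2). intros n Hn. apply HP. rewrite SKc_eq by auto.
  split; apply ball_R; simpl.
  - apply (HK1 n); lia.
  - apply (HK2 n); lia.
Qed.

Lemma e_int n : e (IZR n) = RtoC 1.
Proof.
  unfold e. apply C_eq; simpl.
  - pose proof (per_int (fun y => cos (2 * PI * y))) as H.
    rewrite <- (Rplus_0_l (IZR n)). rewrite H. + rewrite Rmult_0_r; apply cos_0.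
    + intros y. replace (2 * PI * (y + 1)) with (2 * PI * y + 2 * INR 1 * PI) by (simpl; ring).
      apply cos_period.
  - pose proof (per_int (fun y => sin (2 * PI * y))) as H.
    rewrite <- (Rplus_0_l (IZR n)). rewrite H. + rewrite Rmult_0_r; apply sin_0.
    + intros y. replace (2 * PI * (y + 1)) with (2 * PI * y + 2 * INR 1 * PI) by (simpl; ring).
      apply sin_period.
Qed.

Lemma e_shift t n : e (t + IZR n) = e t.
Proof. rewrite e_plus, e_int. Csimpl; ring. Qed.

Lemma e_zero : e 0 = RtoC 1.
Proof. apply (e_int 0). Qed.

Lemma e_ne1 (r q : Z) : (0 < r < q)%Z -> e (IZR r / IZR q) <> RtoC 1.
Proof.
  intros Hr Heq. assert (H1 := f_equal fst Heq). unfold e in H1; simpl in H1.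
  assert (Hq : 0 < IZR q) by (apply IZR_lt; lia).
  assert (Ht : 0 < IZR r / IZR q < 1).
  { split. - apply Rdiv_lt_0_compat; [apply IZR_lt; lia | auto].
    - apply Rmult_lt_reg_r with (IZR q); auto. unfold Rdiv; rewrite Rmult_assoc, Rinv_l by lra.
      rewrite Rmult_1_r, Rmult_1_l. apply IZR_lt; lia. }
  set (t := IZR r / IZR q) in *.
  replace (2 * PI * t) with (2 * (PI * t)) in H1 by ring. rewrite cos_2a_sin in H1.
  assert (0 < sin (PI * t)) by (apply sin_gt_0; pose proof PI_RGT_0; nra).
  nra.
Qed.

Section CsumA.
Context {A : Type}.
Lemma CsumA_plus (l : list A) (g h : A -> C) :
  Csum (map (fun k => Cplus (g k) (h k)) l) = Cplus (Csum (map g l)) (Csum (map h l)).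
Proof. induction l; simpl. - Csimpl; ring. - rewrite IHl. Csimpl; ring. Qed.

Lemma CsumA_mult_r (l : list A) (g : A -> C) c : Csum (map (fun k => Cmult (g k) c) l) = Cmult (Csum (map g l)) c.
Proof. induction l; simpl. - Csimpl; ring. - rewrite IHl. Csimpl; ring. Qed.

Lemma CsumA_mult_l (l : list A) (g : A -> C) c : Csum (map (fun k => Cmult c (g k)) l) = Cmult c (Csum (map g l)).
Proof. induction l; simpl. - Csimpl; ring. - rewrite IHl. Csimpl; ring. Qed.

Lemma CsumA_ext (l : list A) (g h : A -> C) : (forall k, g k = h k) -> Csum (map g l) = Csum (map h l).
Proof. intros H. rewrite (map_ext g h); auto. Qed.

Lemma CsumA_app (l1 l2 : list A) (g : A -> C) : Csum (map g (l1 ++ l2)) = Cplus (Csum (map g l1)) (Csum (map g l2)).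
Proof. rewrite map_app. apply Csum_app. Qed.
End CsumA.

Lemma Csum_swap {A B : Type} (l1 : list A) (l2 : list B) (F : A -> B -> C) :
  Csum (map (fun a => Csum (map (fun b => F a b) l2)) l1) = Csum (map (fun b => Csum (map (fun a => F a b) l1)) l2).
Proof.
  induction l1; simpl.
  - induction l2; simpl; auto. rewrite <- IHl2. Csimpl; ring.
  - rewrite IHl1. rewrite CsumA_plus. auto.
Qed.

Lemma telescope (a : nat -> C) n :
  Csum (map (fun j => Cplus (a (S j)) (Copp (a j))) (seq 0 n)) = Cplus (a n) (Copp (a 0%nat)).
Proof.
  induction n.
  - simpl. Csimpl; ring.
  - rewrite seq_S, CsumA_app, IHn. simpl. Csimpl; ring.
Qed.

Lemma orth (q m : Z) : (0 < q)%Z ->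
  Csum (map (fun v => e (IZR v * IZR m / IZR q)) (residues q)) =
  if Z.eqb (m mod q) 0 then RtoC (IZR q) else RtoC 0.
Proof.
  intros Hq. assert (Hq' : IZR q <> 0) by (apply not_0_IZR; lia).
  unfold residues. rewrite map_map.
  destruct (Z.eqb_spec (m mod q) 0) as [Hm|Hm].
  - apply Z.mod_divide in Hm; [|lia]. destruct Hm as [c Hc].
    rewrite (map_ext _ (fun _ => RtoC 1)).
    + assert (G : forall n, Csum (map (fun _ : nat => RtoC 1) (seq 0 n)) = RtoC (INR n)).
      { induction n. - reflexivity.
        - rewrite seq_S, CsumA_app, IHn, S_INR. simpl. Csimpl; ring. }
      rewrite G, INR_IZR_INZ, Z2Nat.id by lia. auto.
    + intros j. rewrite Hc, mult_IZR.
      replace (IZR (Z.of_nat j) * (IZR c * IZR q) / IZR q) with (0 + IZR (Z.of_nat j * c)) by (rewrite mult_IZR; field; auto).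
      rewrite e_shift. apply e_zero.
  - set (w := e (IZR m / IZR q)).
    assert (Hw : w <> RtoC 1).
    { unfold w. rewrite (Z.div_mod m q) by lia. rewrite plus_IZR, mult_IZR.
      replace ((IZR q * IZR (m / q) + IZR (m mod q)) / IZR q) with (IZR (m mod q) / IZR q + IZR (m / q)) by (field; auto).
      rewrite e_shift. apply e_ne1. pose proof (Z.mod_pos_bound m q Hq). lia. }
    set (a := fun j : nat => e (IZR (Z.of_nat j) * IZR m / IZR q)).
    set (Ssum := Csum (map a (seq 0 (Z.to_nat q)))).
    assert (HS : Cmult Ssum (Cplus w (Copp (RtoC 1))) = RtoC 0).
    { unfold Ssum. rewrite <- CsumA_mult_r.
      rewrite (CsumA_ext _ _ (fun j => Cplus (a (S j)) (Copp (a j)))).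
      - rewrite telescope. unfold a.
        rewrite Z2Nat.id by lia. 
        replace (IZR q * IZR m / IZR q) with (0 + IZR m) by (field; auto).
        rewrite e_shift. simpl. rewrite Rmult_0_l. unfold Rdiv; rewrite Rmult_0_l. rewrite e_zero.
        Csimpl; ring.
      - intros j. unfold a, w. rewrite Nat2Z.inj_succ, succ_IZR.
        replace ((IZR (Z.of_nat j) + 1) * IZR m / IZR q) with (IZR (Z.of_nat j) * IZR m / IZR q + IZR m / IZR q) by (field; auto).
        rewrite e_plus. Csimpl; ring. }
    assert (Hd : Cplus w (Copp (RtoC 1)) <> RtoC 0).
    { intros H. apply Hw. assert (H1 := f_equal fst H). assert (H2 := f_equal snd H).
      simpl in H1, H2. apply C_eq; simpl; lra. }
    transitivity (Cmult (Cmult Ssum (Cplus w (Copp (RtoC 1)))) (Cinv (Cplus w (Copp (RtoC 1))))).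
    + rewrite <- Cmult_assoc. rewrite Cinv_r by auto. Csimpl; ring.
    + rewrite HS. Csimpl; ring.
Qed.

Lemma Peval_cong P k k' : (k - k' | Peval P k - Peval P k')%Z.
Proof.
  induction P; simpl.
  - exists 0%Z. ring.
  - replace (a + k * Peval P k - (a + k' * Peval P k'))%Z with
      (k * (Peval P k - Peval P k') + (k - k') * Peval P k')%Z by ring.
    apply Z.divide_add_r; [apply Z.divide_mul_r; auto | apply Z.divide_mul_l; apply Z.divide_refl].
Qed.

Lemma sum_ind_nat (F : Z -> C) (w0 : Z) n : (0 <= w0)%Z ->
  Csum (map (fun w => if Z.eqb w w0 then F w else RtoC 0) (map Z.of_nat (seq 0 n))) =
  if Z.ltb w0 (Z.of_nat n) then F w0 else RtoC 0.
Proof.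
  intros Hw. induction n.
  - simpl. destruct (Z.ltb_spec w0 0); [lia|auto].
  - rewrite seq_S, map_app, CsumA_app, IHn. cbn [map]. rewrite Csum_cons. change (Csum nil) with (RtoC 0).
    rewrite Nat.add_0_l.
    destruct (Z.ltb_spec w0 (Z.of_nat n)); destruct (Z.ltb_spec w0 (Z.of_nat (S n)));
    destruct (Z.eqb_spec (Z.of_nat n) w0); try lia; subst; Csimpl; ring.
Qed.

Lemma CsumA_ext_in {A} (l : list A) (g h : A -> C) : (forall k, In k l -> g k = h k) -> Csum (map g l) = Csum (map h l).
Proof. intros H. rewrite (map_ext_in g h); auto. Qed.

Lemma sum_indicator (q : Z) (F : Z -> C) (k : Z) : (0 < q)%Z ->
  Csum (map (fun w => if Z.eqb ((k - w) mod q)%Z 0 then F w else RtoC 0) (residues q)) = F (k mod q)%Z.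
Proof.
  intros Hq. unfold residues.
  rewrite (CsumA_ext_in _ _ (fun w => if Z.eqb w (k mod q)%Z then F w else RtoC 0)).
  - rewrite sum_ind_nat by (apply Z.mod_pos_bound; auto).
    rewrite Z2Nat.id by lia. destruct (Z.ltb_spec (k mod q) q); auto.
    pose proof (Z.mod_pos_bound k q Hq). lia.
  - intros w Hw. apply in_map_iff in Hw. destruct Hw as [j [Hj1 Hj2]]. apply in_seq in Hj2.
    assert (Hw : (0 <= w < q)%Z) by lia.
    destruct (Z.eqb_spec ((k - w) mod q) 0) as [H|H]; destruct (Z.eqb_spec w (k mod q)) as [H'|H']; auto.
    + exfalso. apply H'. apply Z.mod_divide in H; [|lia]. destruct H as [c Hc].
      replace k with (w + c * q)%Z by lia. rewrite Z_mod_plus_full. rewrite Z.mod_small; auto.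
    + exfalso. apply H. apply Z.mod_divide; [lia|]. exists (k / q)%Z.
      pose proof (Z.div_mod k q ltac:(lia)). lia.
Qed.

Lemma key (P : list Z) (u q k : Z) : (0 < q)%Z ->
  Cmult (RtoC (1 / IZR q)) (Csum (map (fun v => Cmult (Gsum P u v q) (e (IZR k * (IZR v / IZR q)))) (residues q)))
  = e (IZR u / IZR q * IZR (Peval P k)).
Proof.
  intros Hq. assert (Hq' : IZR q <> 0) by (apply not_0_IZR; lia).
  unfold Gsum, e_q.
  rewrite (CsumA_ext (residues q) _ (fun v => Csum (map (fun w => Cmult (e (IZR (u * Peval P w) / IZR q))
             (e (IZR v * IZR (k - w) / IZR q))) (residues q)))).
  2: { intros v. rewrite <- CsumA_mult_r. apply CsumA_ext. intros w. rewrite <- !e_plus. f_equal.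
       rewrite !minus_IZR, !mult_IZR. field. auto. }
  rewrite Csum_swap.
  rewrite (CsumA_ext (residues q) _ (fun w => Cmult (e (IZR (u * Peval P w) / IZR q))
             (if Z.eqb ((k - w) mod q) 0 then RtoC (IZR q) else RtoC 0))).
  2: { intros w. rewrite CsumA_mult_l. rewrite orth; auto. }
  rewrite <- CsumA_mult_l.
  rewrite (CsumA_ext _ _ (fun w => if Z.eqb ((k - w) mod q) 0 then e (IZR (u * Peval P w) / IZR q) else RtoC 0)).
  2: { intros w. destruct (Z.eqb ((k - w) mod q) 0); Csimpl; field; auto. }
  rewrite sum_indicator by auto.
  destruct (Peval_cong P k (k mod q)) as [d Hd].
  replace (IZR u / IZR q * IZR (Peval P k)) with (IZR (u * Peval P (k mod q)) / IZR q + IZR (u * (k / q) * d)).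
  - rewrite e_shift. auto.
  - assert (Hk : (k - k mod q = q * (k / q))%Z) by (pose proof (Z.div_mod k q ltac:(lia)); lia).
    assert (E : (Peval P k = Peval P (k mod q) + q * (k / q) * d)%Z).
    { rewrite Hk in Hd. lia. }
    rewrite E. rewrite !mult_IZR, plus_IZR, !mult_IZR. field. auto.
Qed.

Lemma U_partial_eq (P : list Z) f (u q : Z) x K : (0 < q)%Z ->
  U_partial P f (IZR u / IZR q) x K =
  Cmult (RtoC (1 / IZR q)) (Csum (map (fun v => Cmult (Gsum P u v q) (SKc f (x + IZR v / IZR q) K)) (residues q))).
Proof.
  intros Hq. unfold SKc.
  rewrite (CsumA_ext (residues q) _ (fun v => Csum (map (fun k => Cmult (Gsum P u v q)
      (Cmult (fourier_coeff f k) (e (IZR k * (x + IZR v / IZR q))))) (symrange K)))).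
  2: { intros v. rewrite CsumA_mult_l. auto. }
  rewrite Csum_swap. rewrite <- CsumA_mult_l.
  unfold U_partial. apply CsumA_ext. intros k.
  rewrite (CsumA_ext (residues q) _ (fun v => Cmult (Cmult (fourier_coeff f k) (e (IZR k * x)))
      (Cmult (Gsum P u v q) (e (IZR k * (IZR v / IZR q)))))).
  2: { intros v. replace (IZR k * (x + IZR v / IZR q)) with (IZR k * x + IZR k * (IZR v / IZR q)) by ring.
       rewrite e_plus. ring. }
  rewrite CsumA_mult_l.
  transitivity (Cmult (Cmult (fourier_coeff f k) (e (IZR k * x)))
     (Cmult (RtoC (1 / IZR q)) (Csum (map (fun v => Cmult (Gsum P u v q) (e (IZR k * (IZR v / IZR q)))) (residues q))))).
  2: ring.
  rewrite key by auto. rewrite Rplus_comm, e_plus. ring.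
Qed.

Lemma R_lim_lin (u v : nat -> R) a b lu lv :
  filterlim u eventually (locally lu) -> filterlim v eventually (locally lv) ->
  filterlim (fun n => a * u n + b * v n) eventually (locally (a * lu + b * lv)).
Proof.
  intros Hu Hv.
  assert (H1 : is_lim_seq u lu) by exact Hu. assert (H2 : is_lim_seq v lv) by exact Hv.
  pose proof (is_lim_seq_scal_l u a lu H1) as H3. pose proof (is_lim_seq_scal_l v b lv H2) as H4.
  simpl in H3, H4.
  exact (is_lim_seq_plus' _ _ _ _ H3 H4).
Qed.

Lemma Clim_split (g : nat -> C) l :
  filterlim (fun n => fst (g n)) eventually (locally (fst l)) ->
  filterlim (fun n => snd (g n)) eventually (locally (snd l)) ->
  filterlim g eventually (locally l).
Proof.
  intros H1 H2 P [eps HP].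
  destruct (H1 (ball (fst l) eps) (locally_ball _ _)) as [N1 HN1].
  destruct (H2 (ball (snd l) eps) (locally_ball _ _)) as [N2 HN2].
  exists (Nat.max N1 N2). intros n Hn. apply HP. split; [apply HN1 | apply HN2]; lia.
Qed.

Lemma Clim_fst (g : nat -> C) l : filterlim g eventually (locally l) ->
  filterlim (fun n => fst (g n)) eventually (locally (fst l)).
Proof. intros H. exact (comp_lim _ g l true H). Qed.
Lemma Clim_snd (g : nat -> C) l : filterlim g eventually (locally l) ->
  filterlim (fun n => snd (g n)) eventually (locally (snd l)).
Proof. intros H. exact (comp_lim _ g l false H). Qed.

Lemma Clim_plus (g h : nat -> C) lg lh : filterlim g eventually (locally lg) -> filterlim h eventually (locally lh) ->
  filterlim (fun n => Cplus (g n) (h n)) eventually (locally (Cplus lg lh)).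
Proof.
  intros Hg Hh. apply Clim_split; simpl.
  - pose proof (R_lim_lin _ _ 1 1 _ _ (Clim_fst _ _ Hg) (Clim_fst _ _ Hh)) as H.
    replace (fun n => fst (g n) + fst (h n)) with (fun n => 1 * fst (g n) + 1 * fst (h n))
      by (apply functional_extensionality; intros; ring).
    replace (fst lg + fst lh) with (1 * fst lg + 1 * fst lh) by ring. exact H.
  - pose proof (R_lim_lin _ _ 1 1 _ _ (Clim_snd _ _ Hg) (Clim_snd _ _ Hh)) as H.
    replace (fun n => snd (g n) + snd (h n)) with (fun n => 1 * snd (g n) + 1 * snd (h n))
      by (apply functional_extensionality; intros; ring).
    replace (snd lg + snd lh) with (1 * snd lg + 1 * snd lh) by ring. exact H.
Qed.

Lemma Clim_mult (c : C) (g : nat -> C) lg : filterlim g eventually (locally lg) ->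
  filterlim (fun n => Cmult c (g n)) eventually (locally (Cmult c lg)).
Proof.
  intros Hg. apply Clim_split; simpl.
  - pose proof (R_lim_lin _ _ (fst c) (- snd c) _ _ (Clim_fst _ _ Hg) (Clim_snd _ _ Hg)) as H.
    replace (fun n => fst c * fst (g n) - snd c * snd (g n)) with (fun n => fst c * fst (g n) + - snd c * snd (g n))
      by (apply functional_extensionality; intros; ring).
    replace (fst c * fst lg - snd c * snd lg) with (fst c * fst lg + - snd c * snd lg) by ring. exact H.
  - pose proof (R_lim_lin _ _ (fst c) (snd c) _ _ (Clim_snd _ _ Hg) (Clim_fst _ _ Hg)) as H.
    replace (fun n => fst c * snd (g n) + snd c * fst (g n)) with (fun n => fst c * snd (g n) + snd c * fst (g n))
      by reflexivity. exact H.
Qed.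

Lemma Clim_const (c : C) : filterlim (fun _ : nat => c) eventually (locally c).
Proof. intros P HP. exists 0%nat. intros. apply locally_singleton; auto. Qed.

Lemma Clim_sum (l : list Z) (c : Z -> C) (S : Z -> nat -> C) (L : Z -> C) :
  (forall v, filterlim (S v) eventually (locally (L v))) ->
  filterlim (fun K => Csum (map (fun v => Cmult (c v) (S v K)) l)) eventually
    (locally (Csum (map (fun v => Cmult (c v) (L v)) l))).
Proof.
  intros H. induction l; simpl.
  - apply Clim_const.
  - apply Clim_plus; auto. apply Clim_mult; auto.
Qed.

Theorem part1 (P : list Z) (f : R -> C) : class_D f ->
  forall (u q : Z), (0 < q)%Z -> forall x : R,
    filterlim (U_partial P f (IZR u / IZR q) x) eventually (locally (U_rational P f u q x)).
Proof.
  intros HD u q Hq x.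
  replace (U_partial P f (IZR u / IZR q) x) with
    (fun K => Cmult (RtoC (1 / IZR q)) (Csum (map (fun v => Cmult (Gsum P u v q) (SKc f (x + IZR v / IZR q) K)) (residues q)))).
  2: { apply functional_extensionality; intros K. rewrite U_partial_eq; auto. }
  unfold U_rational. apply Clim_mult. apply Clim_sum. intros v. apply SKc_lim; auto.
Qed.

Lemma smono_le (a : nat -> R) n : (forall i, (i < n)%nat -> a i < a (S i)) ->
  forall j k, (j <= k)%nat -> (k <= n)%nat -> a j <= a k.
Proof. intros H. apply mono_le. intros i Hi; left; auto. Qed.

Lemma smono_lt (a : nat -> R) n : (forall i, (i < n)%nat -> a i < a (S i)) ->
  forall j k, (j < k)%nat -> (k <= n)%nat -> a j < a k.
Proof.
  intros H j k Hjk Hk. apply Rlt_le_trans with (a (S j)); [apply H; lia|].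
  apply (smono_le a n H); lia.
Qed.

Lemma find_gap (a : nat -> R) n y : (forall i, (i < n)%nat -> a i < a (S i)) ->
  a 0%nat < y < a n -> (forall i, (i <= n)%nat -> a i <> y) ->
  exists i, (i < n)%nat /\ a i < y < a (S i).
Proof.
  intros Hm. induction n; intros Hy Hne; [lra|].
  destruct (Rlt_le_dec (a n) y) as [H|H].
  - exists n. split; [lia|lra].
  - destruct (Req_dec (a n) y) as [E|E]; [exfalso; apply (Hne n); auto|].
    destruct IHn as [i [Hi1 Hi2]].
    + intros; apply Hm; lia.
    + lra.
    + intros; apply Hne; lia.
    + exists i; split; [lia|auto].
Qed.

Lemma no_point_in_gap (a : nat -> R) n i k : (forall j, (j < n)%nat -> a j < a (S j)) ->
  (i < n)%nat -> (k <= n)%nat -> ~ (a i < a k < a (S i)).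
Proof.
  intros Hm Hi Hk [H1 H2]. destruct (le_lt_dec k i).
  - pose proof (smono_le a n Hm k i ltac:(lia) ltac:(lia)). lra.
  - pose proof (smono_le a n Hm (S i) k ltac:(lia) ltac:(lia)). lra.
Qed.

Lemma partition_exists (L : list R) : exists n (a : nat -> R), a 0%nat = 0 /\ a n = 1 /\
  (forall i, (i < n)%nat -> a i < a (S i)) /\
  (forall s, In s L -> 0 < s < 1 -> exists i, (i <= n)%nat /\ a i = s).
Proof.
  induction L as [|s L IH].
  - exists 1%nat, (fun i => match i with O => 0 | _ => 1 end). split; [auto|split; [auto|split]].
    + intros i Hi. assert (i = 0%nat) by lia. subst. lra.
    + intros s [].
  - destruct IH as [n [a [Ha0 [Han [Hm Hp]]]]].
    assert (Hold : forall s', In s' L -> 0 < s' < 1 -> exists i, (i <= n)%nat /\ a i = s') by auto.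
    destruct (classic (0 < s < 1 /\ forall i, (i <= n)%nat -> a i <> s)) as [[Hs Hne]|Hcase].
    + destruct (find_gap a n s Hm ltac:(lra) Hne) as [i [Hi [Hi1 Hi2]]].
      exists (S n), (fun j => if (j <=? i)%nat then a j else if (j =? S i)%nat then s else a (j - 1)%nat).
      split; [|split; [|split]].
      * simpl. auto.
      * destruct (Nat.leb_spec (S n) i); [lia|]. destruct (Nat.eqb_spec (S n) (S i)); [lia|].
        replace (S n - 1)%nat with n by lia. auto.
      * intros j Hj.
        destruct (Nat.leb_spec j i); destruct (Nat.leb_spec (S j) i);
        destruct (Nat.eqb_spec j (S i)); destruct (Nat.eqb_spec (S j) (S i)); try lia.
        -- apply Hm; lia.
        -- assert (j = i) by lia. subst. auto.
        -- subst. replace (S (S i) - 1)%nat with (S i) by lia. auto.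
        -- replace (S j - 1)%nat with (S (j - 1)) by lia. apply Hm; lia.
      * intros s' [E|Hin] Hs'.
        -- subst s'. exists (S i). split; [lia|].
           destruct (Nat.leb_spec (S i) i); [lia|]. rewrite Nat.eqb_refl. auto.
        -- destruct (Hp s' Hin Hs') as [k [Hk1 Hk2]].
           destruct (le_lt_dec k i).
           ++ exists k. split; [lia|]. destruct (Nat.leb_spec k i); [auto|lia].
           ++ exists (S k). split; [lia|]. destruct (Nat.leb_spec (S k) i); [lia|].
              destruct (Nat.eqb_spec (S k) (S i)); [lia|]. replace (S k - 1)%nat with k by lia. auto.
    + exists n, a. split; [auto|split; [auto|split; [auto|]]].
      intros s' [E|Hin] Hs'.
      * subst s'. apply NNPP. intros Hno. apply Hcase. split; auto.
        intros i Hi E. apply Hno. exists i. auto.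
      * apply Hp; auto.
Qed.

Definition LC (L : list R) (g : R -> C) : Prop :=
  forall y, 0 < y < 1 -> ~ In y L -> exists eps, 0 < eps /\ forall z, Rabs (z - y) < eps -> g z = g y.

Lemma LC_pc L g : LC L g -> piecewise_constant g.
Proof.
  intros HL. destruct (partition_exists L) as [n [a [Ha0 [Han [Hm Hp]]]]].
  exists n, a. split; [auto|split; [auto|split; [auto|]]].
  intros i Hi.
  assert (Hder : forall t, a i < t < a (S i) -> @is_derive R_AbsRing C_R_NormedModule g t zero).
  { intros t Ht.
    assert (Ht01 : 0 < t < 1).
    { pose proof (smono_le a n Hm 0 i ltac:(lia) ltac:(lia)).
      pose proof (smono_le a n Hm (S i) n ltac:(lia) ltac:(lia)). lra. }
    assert (HnI : ~ In t L).
    { intros Hin. destruct (Hp t Hin Ht01) as [k [Hk1 Hk2]].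
      apply (no_point_in_gap a n i k Hm Hi Hk1). rewrite Hk2. auto. }
    destruct (HL t Ht01 HnI) as [eps [Heps Hc]].
    apply (@is_derive_ext_loc R_AbsRing C_R_NormedModule (fun _ => g t)).
    - exists (mkposreal eps Heps). intros z Hz. pose proof (proj1 (ball_R _ _ _) Hz) as Hz'.
      simpl in Hz'. symmetry. apply Hc. auto.
    - apply (@is_derive_const R_AbsRing C_R_NormedModule). }
  set (mid := (a i + a (S i)) / 2).
  assert (Hi' := Hm i Hi).
  exists (g mid). intros y Hy.
  destruct (Rtotal_order y mid) as [H|[H|H]].
  - apply (@eq_is_derive C_R_NormedModule g y mid); auto.
    intros t Ht. apply Hder. unfold mid in *; lra.
  - subst; auto.
  - symmetry. apply (@eq_is_derive C_R_NormedModule g mid y); auto.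
    intros t Ht. apply Hder. unfold mid in *; lra.
Qed.

Lemma LC_plus L1 L2 g1 g2 : LC L1 g1 -> LC L2 g2 -> LC (L1 ++ L2) (fun y => Cplus (g1 y) (g2 y)).
Proof.
  intros H1 H2 y Hy Hn.
  destruct (H1 y Hy) as [e1 [He1 Hc1]]; [intros Hin; apply Hn; apply in_or_app; auto|].
  destruct (H2 y Hy) as [e2 [He2 Hc2]]; [intros Hin; apply Hn; apply in_or_app; auto|].
  exists (Rmin e1 e2). split; [apply Rmin_glb_lt; auto|].
  intros z Hz. rewrite Hc1, Hc2; auto.
  - eapply Rlt_le_trans; [apply Hz | apply Rmin_r].
  - eapply Rlt_le_trans; [apply Hz | apply Rmin_l].
Qed.

Lemma LC_mult L g c : LC L g -> LC L (fun y => Cmult c (g y)).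
Proof.
  intros H y Hy Hn. destruct (H y Hy Hn) as [e [He Hc]]. exists e. split; auto.
  intros z Hz. rewrite Hc; auto.
Qed.

Lemma LC_const c : LC nil (fun _ => c).
Proof. intros y _ _. exists 1. split; [lra|auto]. Qed.

Lemma LC_shift f s : class_D f -> piecewise_constant f -> 0 <= s < 1 ->
  exists L, LC L (fun y => f (y + s)).
Proof.
  intros [_ [Hper _]] [n [a [Ha0 [Han [Hm Hc]]]]] Hs.
  exists (map (fun i => a i - s) (seq 0 (S n)) ++ map (fun i => a i + 1 - s) (seq 0 (S n))).
  intros y Hy Hn.
  assert (Hnot1 : forall i, (i <= n)%nat -> a i <> y + s).
  { intros i Hi E. apply Hn. apply in_or_app. left. apply in_map_iff. exists i. split; [lra|].
    apply in_seq. lia. }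
  assert (Hnot2 : forall i, (i <= n)%nat -> a i <> y + s - 1).
  { intros i Hi E. apply Hn. apply in_or_app. right. apply in_map_iff. exists i. split; [lra|].
    apply in_seq. lia. }
  destruct (Rlt_le_dec (y + s) 1) as [Hw|Hw].
  - destruct (find_gap a n (y + s) Hm ltac:(lra) Hnot1) as [i [Hi [Hi1 Hi2]]].
    destruct (Hc i Hi) as [c Hcc].
    exists (Rmin (y + s - a i) (a (S i) - (y + s))). split; [apply Rmin_glb_lt; lra|].
    intros z Hz. pose proof (Rmin_l (y + s - a i) (a (S i) - (y + s))).
    pose proof (Rmin_r (y + s - a i) (a (S i) - (y + s))). apply Rabs_def2 in Hz.
    rewrite !Hcc; auto; lra.
  - destruct (Req_dec (y + s) 1) as [E|E].
    + exfalso. apply (Hnot1 n); auto. lra.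
    + destruct (find_gap a n (y + s - 1) Hm ltac:(lra) Hnot2) as [i [Hi [Hi1 Hi2]]].
      destruct (Hc i Hi) as [c Hcc].
      exists (Rmin (y + s - 1 - a i) (a (S i) - (y + s - 1))). split; [apply Rmin_glb_lt; lra|].
      intros z Hz. pose proof (Rmin_l (y + s - 1 - a i) (a (S i) - (y + s - 1))).
      pose proof (Rmin_r (y + s - 1 - a i) (a (S i) - (y + s - 1))). apply Rabs_def2 in Hz.
      replace (z + s) with ((z + s - 1) + 1) by ring. replace (y + s) with ((y + s - 1) + 1) by ring.
      rewrite !Hper. rewrite !Hcc; auto; lra.
Qed.

Lemma LC_ext L (g1 g2 : R -> C) : (forall y, g1 y = g2 y) -> LC L g1 -> LC L g2.
Proof. intros H. replace g2 with g1 by (apply functional_extensionality; auto). auto. Qed.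

Lemma LC_sum (f : R -> C) (q : Z) (c : Z -> C) (l : list Z) :
  (forall v, In v l -> exists L, LC L (fun y => f (y + IZR v / IZR q))) ->
  exists L, LC L (fun x => Csum (map (fun v => Cmult (c v) (f (x + IZR v / IZR q))) l)).
Proof.
  induction l as [|v l IH]; intros H.
  - exists nil. apply (LC_ext nil (fun _ => RtoC 0)); [intros; reflexivity | apply LC_const].
  - destruct IH as [L1 HL1]; [intros; apply H; right; auto|].
    destruct (H v (or_introl eq_refl)) as [L2 HL2].
    exists (L2 ++ L1). apply (LC_plus L2 L1 (fun x => Cmult (c v) (f (x + IZR v / IZR q)))); auto.
    apply LC_mult; auto.
Qed.

Lemma LC_Urat P f u q : class_D f -> piecewise_constant f -> (0 < q)%Z ->
  exists L, LC L (U_rational P f u q).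
Proof.
  intros HD Hpc Hq.
  destruct (LC_sum f q (fun v => Gsum P u v q) (residues q)) as [L HL].
  - intros v Hv. apply LC_shift; auto. unfold residues in Hv.
    apply in_map_iff in Hv. destruct Hv as [j [Hj1 Hj2]]. apply in_seq in Hj2.
    assert (H1 : (0 <= v)%Z) by lia. assert (H2 : (v < q)%Z) by lia.
    apply IZR_le in H1. apply IZR_lt in H2. assert (Hq' : 0 < IZR q) by (apply IZR_lt; lia).
    split.
    + apply Rmult_le_pos; [lra|]. left; apply Rinv_0_lt_compat; lra.
    + apply Rmult_lt_reg_r with (IZR q); auto. unfold Rdiv. rewrite Rmult_assoc, Rinv_l by lra. lra.
  - exists L. unfold U_rational. apply LC_mult. auto.
Qed.

Theorem theorem1p4 (P : list Z) (f : R -> C) :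
  class_D f ->
  (forall (u q : Z), (0 < q)%Z -> Z.gcd u q = 1%Z ->
     forall x : R,
       filterlim (U_partial P f (IZR u / IZR q) x) eventually
         (locally (U_rational P f u q x))) /\
  (piecewise_constant f ->
     forall (u q : Z), (0 < q)%Z -> Z.gcd u q = 1%Z ->
       exists g : R -> C, piecewise_constant g /\
         forall x : R,
           filterlim (U_partial P f (IZR u / IZR q) x) eventually
             (locally (g x))).
Proof.
  intros HD. split.
  - intros u q Hq _ x. apply part1; auto.
  - intros Hpc u q Hq _. exists (U_rational P f u q). split.
    + destruct (LC_Urat P f u q HD Hpc Hq) as [L HL]. apply (LC_pc L). auto.
    + intros x. apply part1; auto.
Qed.
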